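(* Let $G=\mathbf{PGO}_8$ be the split adjoint group of type ${\rm D}_4$. Then $\operatorname{Sdec}(G)=\operatorname{Dec}(G)$, i.e. every semi-decomposable degree $3$ invariant of $G$ is decomposable.
   Context: For a split semisimple group $G=G^{sc}/\boldsymbol{\mu}$ let $T^*_{sc}$ be the weight lattice, $T^*\subseteq T^*_{sc}$ the characters trivial on $\boldsymbol{\mu}$, $W$ the Weyl group. Let $c_2\colon\mathbb{Z}[T^*_{sc}]\to S^2(T^*_{sc})$ be the additive map obtained by composing the ring homomorphism $\mathbb{Z}[T^*_{sc}]\to S^*(T^*_{sc})/S^{\ge3}(T^*_{sc})$, $e^{-\omega}\mapsto1-\omega$ (so $e^{\omega}\mapsto1+\omega+\omega^2$) for fundamental weights $\omega$, with projection to degree 2. $\operatorname{Dec}(G)=c_2(\mathbb{Z}[T^*]^W)$ (decomposable invariants); $I^W_{sc}$ is the ideal of $\mathbb{Z}[T^*_{sc}]$ generated by the $W$-invariant elements of the augmentation ideal (kernel of $e^\lambda\mapsto1$); $\operatorname{Sdec}(G)=c_2(\mathbb{Z}[T^*]\cap I^W_{sc})$ (semi-decomposable invariants). *)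

(* Defs.v *)
From HB Require Import structures.
From mathcomp Require Import all_boot all_order all_algebra.
From mathcomp Require Import finmap.
From mathcomp Require Export monalg.

Set Implicit Arguments.
Unset Strict Implicit.
Unset Printing Implicit Defensive.

Import Order.TTheory GRing.Theory Num.Theory.
Local Open Scope ring_scope.

(* The weight lattice T^*_sc is Z^4, written in the basis of the       *)
(* fundamental weights w_0,..,w_3 (node 1 is the central node of the   *)
(* Dynkin diagram D4).                                                 *)
Definition weight := 'rV[int]_4.

(* Cartan matrix of D4: row i = the simple root alpha_i expressed in   *)
(* the basis of fundamental weights; entry (i,j) = <alpha_i, alpha_j^v> *)
Definition cartanD4 : 'M[int]_4 :=
  \matrix_(i < 4, j < 4)
    (if i == j then 2 else if (i == 1 :> nat) || (j == 1 :> nat) then -1 else 0).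

Definition simple_root (i : 'I_4) : weight := row i cartanD4.

(* simple reflection s_i(l) = l - <l, alpha_i^v> alpha_i,              *)
(* and <l, alpha_i^v> = l_i in fundamental-weight coordinates.          *)
Definition sref (i : 'I_4) (l : weight) : weight := l - (l ord0 i) *: simple_root i.

Inductive inWeyl : (weight -> weight) -> Prop :=
  | inWeyl_id : inWeyl id
  | inWeyl_comp (i : 'I_4) (w : weight -> weight) :
      inWeyl w -> inWeyl (sref i \o w).

(* T^* for the adjoint group PGO_8 (mu = full centre): the root lattice *)
Definition in_rootlat (l : weight) : Prop :=
  exists c : 'rV[int]_4, l = c *m cartanD4.

(* The group ring Z[T^*_sc]: finitely supported Z-valued functions on  *)
(* the weight lattice; << a *g l >> is a e^l.                          *)
Definition GR := {malg int[weight]}.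

Definition gr_mul (f g : GR) : GR :=
  \sum_(a <- msupp f) \sum_(b <- msupp g) << f@_a * g@_b *g (a + b) >>.

Definition aug (f : GR) : int := \sum_(a <- msupp f) f@_a.

Definition gr_act (w : weight -> weight) (f : GR) : GR :=
  \sum_(a <- msupp f) << f@_a *g w a >>.

Definition W_invariant (f : GR) : Prop :=
  forall w, inWeyl w -> gr_act w f = f.

Definition in_ZT (f : GR) : Prop := forall a, a \in msupp f -> in_rootlat a.

Definition in_IWsc (x : GR) : Prop :=
  exists s : seq (GR * GR),
    (forall p, p \in s -> W_invariant p.2 /\ aug p.2 = 0) /\
    x = \sum_(p <- s) gr_mul p.1 p.2.

(* The symmetric algebra S^*(T^*_sc) = Z[w_0,..,w_3]                   *)
Definition Sym := {malg int[{cmonom 'I_4}]}.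

Definition wvar (i : 'I_4) : Sym := << ucm i >>.

(* image of e^l under the ring hom e^{-w} |-> 1 - w, i.e.              *)
(* e^{w} |-> 1 + w + w^2 (modulo S^{>=3}); taken here without          *)
(* truncation, which does not affect the degree <= 2 part.             *)
Definition chern_img (l : weight) : Sym :=
  \prod_(i < 4)
    (if 0 <= l ord0 i then (1 + wvar i + wvar i ^+ 2) ^+ `|l ord0 i|%N
     else (1 - wvar i) ^+ `|l ord0 i|%N).

Definition deg2 (p : Sym) : Sym :=
  \sum_(m <- msupp p | mdeg m == 2%N) << p@_m *g m >>.

Definition c2 (f : GR) : Sym :=
  deg2 (\sum_(a <- msupp f) f@_a *: chern_img a).

Definition Dec (q : Sym) : Prop :=
  exists f : GR, in_ZT f /\ W_invariant f /\ c2 f = q.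

Definition Sdec (q : Sym) : Prop :=
  exists f : GR, in_ZT f /\ in_IWsc f /\ c2 f = q.

(* Main.v *)
Require Import Defs.
From HB Require Import structures.
From mathcomp Require Import all_boot all_order all_algebra.
From mathcomp Require Import finmap monalg.
From mathcomp Require Import ring zify.
Set Implicit Arguments. Unset Strict Implicit. Unset Printing Implicit Defensive.
Import Order.TTheory GRing.Theory Num.Theory.
Local Open Scope ring_scope.

Definition o0 : 'I_4 := @Ordinal 4 0 isT.
Definition o1 : 'I_4 := @Ordinal 4 1 isT.
Definition o2 : 'I_4 := @Ordinal 4 2 isT.
Definition o3 : 'I_4 := @Ordinal 4 3 isT.

Lemma ord4P (P : 'I_4 -> Prop) : P o0 -> P o1 -> P o2 -> P o3 -> forall i, P i.
Proof.
move=> H0 H1 H2 H3 [[|[|[|[|k]]]] Hk] //.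
- by have -> : Ordinal Hk = o0 by apply: val_inj.
- by have -> : Ordinal Hk = o1 by apply: val_inj.
- by have -> : Ordinal Hk = o2 by apply: val_inj.
- by have -> : Ordinal Hk = o3 by apply: val_inj.
Qed.

Definition T4 := (int * int * int * int)%type.
Definition tup (l : weight) : T4 := (l ord0 o0, l ord0 o1, l ord0 o2, l ord0 o3).
Definition sel (t : T4) (j : nat) : int :=
  let: (x0, x1, x2, x3) := t in
  match j with 0 => x0 | 1 => x1 | 2 => x2 | _ => x3 end.
Definition mkw (t : T4) : weight := \row_(j < 4) sel t j.

Lemma tup_mkw t : tup (mkw t) = t.
Proof. by case: t => [[[x0 x1] x2] x3]; rewrite /tup !mxE. Qed.

Lemma mkw_tup l : mkw (tup l) = l.
Proof.
apply/rowP => j; rewrite mxE; move: j; apply: ord4P; rewrite /= ?mxE //;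
  by congr (l _ _); apply: val_inj.
Qed.

Lemma tup_inj : injective tup.
Proof. by move=> a b E; rewrite -(mkw_tup a) -(mkw_tup b) E. Qed.

Definition addt (s t : T4) : T4 :=
  let: (x0, x1, x2, x3) := s in let: (y0, y1, y2, y3) := t in
  (x0 + y0, x1 + y1, x2 + y2, x3 + y3).

Lemma tupD a b : tup (a + b) = addt (tup a) (tup b).
Proof. by rewrite /tup !mxE. Qed.

Definition rf (i : 'I_4) (t : T4) : T4 :=
  let: (x0, x1, x2, x3) := t in
  match nat_of_ord i with
  | 0 => (- x0, x1 + x0, x2, x3)
  | 1 => (x0 + x1, - x1, x2 + x1, x3 + x1)
  | 2 => (x0, x1 + x2, - x2, x3)
  | _ => (x0, x1 + x3, x2, - x3) end.

Lemma tup_sref i l : tup (sref i l) = rf i (tup l).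
Proof.
move: i; apply: ord4P; rewrite /sref /simple_root /tup /rf /cartanD4 !mxE /=;
  congr (_, _, _, _); ring.
Qed.

Definition Sw (ws : seq 'I_4) : weight -> weight :=
  foldr (fun i w => sref i \o w) id ws.

Lemma inWeyl_Sw ws : inWeyl (Sw ws).
Proof. elim: ws => [|i ws IH] /=; [exact: inWeyl_id | exact: inWeyl_comp]. Qed.

Lemma tup_Sw ws b : tup (Sw ws b) = foldr rf (tup b) ws.
Proof. by elim: ws => [|i ws IH] //=; rewrite tup_sref IH. Qed.


Definition II (P : weight -> int) (f : GR) : int := mmap (@idfun int) P f.

Lemma IIE P f : II P f = \sum_(a <- msupp f) f@_a * P a. Proof. by []. Qed.

Lemma IIEw P f (d : {fset weight}) : (msupp f `<=` d)%fset ->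
  II P f = \sum_(a <- d) f@_a * P a.
Proof. exact: mmapEw. Qed.

Lemma IIU P c m : II P << c *g m >> = c * P m. Proof. exact: mmapU. Qed.

Lemma IID P : {morph II P : x y / x + y}. Proof. move=> x y; exact: mmapD. Qed.
Lemma IIB P : {morph II P : x y / x - y}. Proof. move=> x y; exact: mmapB. Qed.
Lemma II0 P : II P 0 = 0. Proof. exact: mmap0. Qed.

Lemma II_sum P I (r : seq I) (F : I -> GR) :
  II P (\sum_(i <- r) F i) = \sum_(i <- r) II P (F i).
Proof.
elim: r => [|i r IH]; first by rewrite !big_nil II0.
by rewrite !big_cons IID IH.
Qed.

Lemma II_ext P Q f : (forall a, P a = Q a) -> II P f = II Q f.
Proof. by move=> E; rewrite !IIE; apply: eq_bigr => a _; rewrite E. Qed.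

Lemma II_lin (u v : int) P Q f :
  II (fun a => u * P a + v * Q a) f = u * II P f + v * II Q f.
Proof.
rewrite !IIE !mulr_sumr -big_split /=; apply: eq_bigr => a _; ring.
Qed.

Lemma II_scale (u : int) P f : II (fun a => u * P a) f = u * II P f.
Proof. by rewrite !IIE mulr_sumr; apply: eq_bigr => a _; ring. Qed.

Lemma gr_actEw w f (d : {fset weight}) : (msupp f `<=` d)%fset ->
  gr_act w f = \sum_(a <- d) << f@_a *g w a >>.
Proof.
move=> le; rewrite /gr_act [LHS](big_fset_incl _ le) => //= x xd /mcoeff_outdom ->.
by rewrite monalgU0.
Qed.

Lemma gr_actD w : {morph gr_act w : x y / x + y}.
Proof.
move=> x y.
rewrite (gr_actEw w (msuppD_le x y)) (gr_actEw w (fsubsetUl (msupp x) (msupp y))).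
rewrite (gr_actEw w (fsubsetUr (msupp x) (msupp y))) -big_split /=.
by apply: eq_bigr => a _; rewrite mcoeffD monalgUD.
Qed.

Lemma gr_act0 w : gr_act w 0 = 0.
Proof. by rewrite /gr_act msupp0 big_seq_fset0. Qed.

Lemma gr_actN w f : gr_act w (- f) = - gr_act w f.
Proof.
rewrite /gr_act msuppN -sumrN; apply: eq_bigr => a _; by rewrite mcoeffN monalgUN.
Qed.

Lemma gr_actB w f g : gr_act w (f - g) = gr_act w f - gr_act w g.
Proof. by rewrite gr_actD gr_actN. Qed.

Lemma gr_actU w c m : gr_act w << c *g m >> = << c *g w m >>.
Proof. by rewrite (gr_actEw w msuppU_le) big_seq_fset1 mcoeffUU. Qed.

Lemma gr_act_sum w I (r : seq I) (F : I -> GR) :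
  gr_act w (\sum_(i <- r) F i) = \sum_(i <- r) gr_act w (F i).
Proof.
elim: r => [|i r IH]; first by rewrite !big_nil gr_act0.
by rewrite !big_cons gr_actD IH.
Qed.

Lemma gr_act_comp u w f : gr_act (u \o w) f = gr_act u (gr_act w f).
Proof.
have -> : gr_act w f = \sum_(a <- msupp f) << f@_a *g w a >> by [].
by rewrite gr_act_sum; apply: eq_bigr => a _; rewrite gr_actU.
Qed.

Lemma II_gr_act P w h : II P (gr_act w h) = \sum_(b <- msupp h) h@_b * P (w b).
Proof. by rewrite /gr_act II_sum; apply: eq_bigr => b _; rewrite IIU. Qed.

Lemma II_gr_mul P g h : II P (gr_mul g h) =
  \sum_(a <- msupp g) \sum_(b <- msupp h) g@_a * h@_b * P (a + b).
Proof.
rewrite /gr_mul II_sum; apply: eq_bigr => a _; rewrite II_sum.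
by apply: eq_bigr => b _; rewrite IIU.
Qed.

Lemma harm_kill P (Ws : seq (seq 'I_4)) :
  (forall a b, \sum_(ws <- Ws) P (a + Sw ws b) = (size Ws)%:R * P a) ->
  (0 < size Ws)%N ->
  forall x, in_IWsc x -> II P x = 0.
Proof.
move=> Hmv Hpos.
have key : forall h, W_invariant h -> aug h = 0 ->
    forall a, \sum_(b <- msupp h) h@_b * P (a + b) = 0.
  move=> h hW h0 a.
  have E : forall ws, \sum_(b <- msupp h) h@_b * P (a + b) =
                      \sum_(b <- msupp h) h@_b * P (a + Sw ws b).
    move=> ws; rewrite -[RHS](II_gr_act (fun b => P (a + b))) hW; [exact: (esym (IIE _ _)) | exact: inWeyl_Sw].
  apply: (@mulfI _ ((size Ws)%:R)); first by rewrite pnatr_eq0 -lt0n.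
  rewrite mulr0 mulr_natl.
  have -> : ((\sum_(b <- msupp h) h@_b * P (a + b)) *+ size Ws) =
      \sum_(ws <- Ws) \sum_(b <- msupp h) h@_b * P (a + Sw ws b).
    rewrite -(eq_bigr _ (fun ws _ => E ws)) big_const_seq count_predT.
    by elim: (size Ws) => [|n IH] //=; rewrite mulrS IH.
  rewrite exchange_big /=.
  transitivity (\sum_(b <- msupp h) h@_b * ((size Ws)%:R * P a)).
    by apply: eq_bigr => b _; rewrite -(Hmv a b) mulr_sumr.
  by rewrite -mulr_suml -/(aug h) h0 mul0r.
move=> x [s [Hs ->]]; rewrite II_sum big1_seq // => p /andP [_ /Hs [hW h0]].
rewrite II_gr_mul big1 // => a _.
rewrite (eq_bigr (fun b => p.1@_a * (p.2@_b * P (a + b)))); last by move=> b _; rewrite mulrA.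
by rewrite -mulr_sumr key // mulr0.
Qed.

Definition ci (x : int) : int :=
  if 0 <= x then ('C((`|x|).+1, 2))%:Z else ('C(`|x|, 2))%:Z.

Lemma bin2S n : ('C(n.+1, 2) * 2 = n.+1 * n)%N.
Proof. by rewrite (bin_ffact n.+1 2) ffactnS ffactn1. Qed.

Lemma ci2 x : 2 * ci x = x * x + x.
Proof.
rewrite /ci; case: x => n /=.
  have := bin2S n => /(congr1 (fun k : nat => k%:Z)); rewrite !PoszM => E.
  by rewrite mulrC E; ring.
rewrite NegzE /=.
have := bin2S n => /(congr1 (fun k : nat => k%:Z)); rewrite !PoszM => E.
by rewrite mulrC E; ring.
Qed.

Lemma fac_pos (v : Sym) (n : nat) : exists r : Sym,
  (1 + v + v ^+ 2) ^+ n = 1 + n%:R * v + ('C(n.+1, 2))%:R * v ^+ 2 + v ^+ 3 * r.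
Proof.
elim: n => [|n [r IH]]; first by exists 0; rewrite expr0 bin_small //; ring.
exists (n%:R + ('C(n.+1, 2))%:R + ('C(n.+1, 2))%:R * v + r * (1 + v + v ^+ 2)).
rewrite exprSr IH (binS n.+1 1) bin1 natrD -[(n.+1)%:R]natr1; ring.
Qed.

Lemma fac_neg (v : Sym) (n : nat) : exists r : Sym,
  (1 - v) ^+ n = 1 - n%:R * v + ('C(n, 2))%:R * v ^+ 2 + v ^+ 3 * r.
Proof.
elim: n => [|n [r IH]]; first by exists 0; rewrite expr0 bin_small //; ring.
exists (r - ('C(n, 2))%:R - v * r).
rewrite exprSr IH (binS n 1) bin1 natrD -[(n.+1)%:R]natr1; ring.
Qed.

Lemma fac (x : int) (v : Sym) : exists r : Sym,
  (if 0 <= x then (1 + v + v ^+ 2) ^+ `|x|%N else (1 - v) ^+ `|x|%N)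
  = 1 + x%:~R * v + (ci x)%:~R * v ^+ 2 + v ^+ 3 * r.
Proof.
rewrite /ci; case: x => n /=.
  by have [r E] := fac_pos v n; exists r; rewrite E.
have [r E] := fac_neg v n.+1; exists r; rewrite E NegzE.
rewrite mulrNz; ring.
Qed.

Definition high (p : Sym) := forall m : {cmonom 'I_4}, (mdeg m <= 2)%N -> p@_m = 0.

Lemma highD p q : high p -> high q -> high (p + q).
Proof. by move=> hp hq m hm; rewrite mcoeffD hp ?hq ?addr0. Qed.

Lemma high_mull q p : high p -> high (q * p).
Proof.
move=> hp m hm; rewrite mcoeffMl big1 // => k1 _; rewrite big1 // => k2 _.
case: eqP => [E|]; last by rewrite mulr0n.
rewrite hp ?mulr0 ?mul0rn //.
by apply: leq_trans hm; rewrite -E mdegM leq_addl.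
Qed.

Lemma high_mulr q p : high p -> high (p * q).
Proof. by move=> hp; rewrite mulrC; apply: high_mull. Qed.

Lemma wvarM i j : wvar i * wvar j = << mmul (ucm i) (ucm j) >>.
Proof. by rewrite /wvar malgM_def fgmulUU mulr1. Qed.

Lemma high_cube i j k : high (wvar i * wvar j * wvar k).
Proof.
move=> m hm; rewrite wvarM /wvar malgM_def fgmulUU mulr1 mcoeffU.
case: eqP => [E|]; last by rewrite mulr0n.
by move: hm; rewrite -E !mdegM !mdegU.
Qed.


Lemma deg2Ew p (d : {fset {cmonom 'I_4}}) : (msupp p `<=` d)%fset ->
  deg2 p = \sum_(m <- d | mdeg m == 2%N) << p@_m *g m >>.
Proof.
move=> le; rewrite /deg2 big_mkcond [RHS]big_mkcond (big_fset_incl _ le) => //= x xd /mcoeff_outdom ->.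
by rewrite monalgU0; case: ifP.
Qed.

Lemma deg2_is_additive : additive deg2.
Proof.
move=> x y.
rewrite (deg2Ew (msuppB_le x y)) (deg2Ew (fsubsetUl (msupp x) (msupp y))).
rewrite (deg2Ew (fsubsetUr (msupp x) (msupp y))) -sumrB /=.
by apply: eq_bigr => a _; rewrite mcoeffB monalgUB.
Qed.

HB.instance Definition _ := GRing.isAdditive.Build Sym Sym deg2 deg2_is_additive.

Lemma deg2U c m : deg2 << c *g m >> = if mdeg m == 2%N then << c *g m >> else 0.
Proof.
rewrite (deg2Ew msuppU_le) big_mkcond big_seq_fset1 mcoeffUU /=.
by case: ifP.
Qed.

Lemma deg2_high p : high p -> deg2 p = 0.
Proof.
move=> hp; rewrite /deg2 big1 // => m /eqP hm.
by rewrite hp ?monalgU0 // hm.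
Qed.

Lemma trunc4 (A0 A1 A2 A3 C0 C1 C2 C3 : int) (W0 W1 W2 W3 : Sym) :
  (1 + A0%:~R * W0 + C0%:~R * W0 ^+ 2) * (1 + A1%:~R * W1 + C1%:~R * W1 ^+ 2) * (1 + A2%:~R * W2 + C2%:~R * W2 ^+ 2) * (1 + A3%:~R * W3 + C3%:~R * W3 ^+ 2) =
  1 + (A0%:~R * W0 + A1%:~R * W1 + A2%:~R * W2 + A3%:~R * W3) + (C0%:~R * (W0 * W0) + C1%:~R * (W1 * W1) + C2%:~R * (W2 * W2) + C3%:~R * (W3 * W3) + (A0 * A1)%:~R * (W0 * W1) + (A0 * A2)%:~R * (W0 * W2) + (A0 * A3)%:~R * (W0 * W3) + (A1 * A2)%:~R * (W1 * W2) + (A1 * A3)%:~R * (W1 * W3) + (A2 * A3)%:~R * (W2 * W3)) + ((A2%:~R * C3%:~R) * ((W2 * W3 * W3) * (1))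
  + (C2%:~R * A3%:~R) * ((W2 * W2 * W3) * (1))
  + (C2%:~R * C3%:~R) * ((W2 * W2 * W3) * (W3))
  + (A1%:~R * C3%:~R) * ((W1 * W3 * W3) * (1))
  + (A1%:~R * A2%:~R * A3%:~R) * ((W1 * W2 * W3) * (1))
  + (A1%:~R * A2%:~R * C3%:~R) * ((W1 * W2 * W3) * (W3))
  + (A1%:~R * C2%:~R) * ((W1 * W2 * W2) * (1))
  + (A1%:~R * C2%:~R * A3%:~R) * ((W1 * W2 * W2) * (W3))
  + (A1%:~R * C2%:~R * C3%:~R) * ((W1 * W2 * W2) * (W3 * W3))
  + (C1%:~R * A3%:~R) * ((W1 * W1 * W3) * (1))
  + (C1%:~R * C3%:~R) * ((W1 * W1 * W3) * (W3))
  + (C1%:~R * A2%:~R) * ((W1 * W1 * W2) * (1))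
  + (C1%:~R * A2%:~R * A3%:~R) * ((W1 * W1 * W2) * (W3))
  + (C1%:~R * A2%:~R * C3%:~R) * ((W1 * W1 * W2) * (W3 * W3))
  + (C1%:~R * C2%:~R) * ((W1 * W1 * W2) * (W2))
  + (C1%:~R * C2%:~R * A3%:~R) * ((W1 * W1 * W2) * (W2 * W3))
  + (C1%:~R * C2%:~R * C3%:~R) * ((W1 * W1 * W2) * (W2 * W3 * W3))
  + (A0%:~R * C3%:~R) * ((W0 * W3 * W3) * (1))
  + (A0%:~R * A2%:~R * A3%:~R) * ((W0 * W2 * W3) * (1))
  + (A0%:~R * A2%:~R * C3%:~R) * ((W0 * W2 * W3) * (W3))
  + (A0%:~R * C2%:~R) * ((W0 * W2 * W2) * (1))
  + (A0%:~R * C2%:~R * A3%:~R) * ((W0 * W2 * W2) * (W3))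
  + (A0%:~R * C2%:~R * C3%:~R) * ((W0 * W2 * W2) * (W3 * W3))
  + (A0%:~R * A1%:~R * A3%:~R) * ((W0 * W1 * W3) * (1))
  + (A0%:~R * A1%:~R * C3%:~R) * ((W0 * W1 * W3) * (W3))
  + (A0%:~R * A1%:~R * A2%:~R) * ((W0 * W1 * W2) * (1))
  + (A0%:~R * A1%:~R * A2%:~R * A3%:~R) * ((W0 * W1 * W2) * (W3))
  + (A0%:~R * A1%:~R * A2%:~R * C3%:~R) * ((W0 * W1 * W2) * (W3 * W3))
  + (A0%:~R * A1%:~R * C2%:~R) * ((W0 * W1 * W2) * (W2))
  + (A0%:~R * A1%:~R * C2%:~R * A3%:~R) * ((W0 * W1 * W2) * (W2 * W3))
  + (A0%:~R * A1%:~R * C2%:~R * C3%:~R) * ((W0 * W1 * W2) * (W2 * W3 * W3))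
  + (A0%:~R * C1%:~R) * ((W0 * W1 * W1) * (1))
  + (A0%:~R * C1%:~R * A3%:~R) * ((W0 * W1 * W1) * (W3))
  + (A0%:~R * C1%:~R * C3%:~R) * ((W0 * W1 * W1) * (W3 * W3))
  + (A0%:~R * C1%:~R * A2%:~R) * ((W0 * W1 * W1) * (W2))
  + (A0%:~R * C1%:~R * A2%:~R * A3%:~R) * ((W0 * W1 * W1) * (W2 * W3))
  + (A0%:~R * C1%:~R * A2%:~R * C3%:~R) * ((W0 * W1 * W1) * (W2 * W3 * W3))
  + (A0%:~R * C1%:~R * C2%:~R) * ((W0 * W1 * W1) * (W2 * W2))
  + (A0%:~R * C1%:~R * C2%:~R * A3%:~R) * ((W0 * W1 * W1) * (W2 * W2 * W3))
  + (A0%:~R * C1%:~R * C2%:~R * C3%:~R) * ((W0 * W1 * W1) * (W2 * W2 * W3 * W3))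
  + (C0%:~R * A3%:~R) * ((W0 * W0 * W3) * (1))
  + (C0%:~R * C3%:~R) * ((W0 * W0 * W3) * (W3))
  + (C0%:~R * A2%:~R) * ((W0 * W0 * W2) * (1))
  + (C0%:~R * A2%:~R * A3%:~R) * ((W0 * W0 * W2) * (W3))
  + (C0%:~R * A2%:~R * C3%:~R) * ((W0 * W0 * W2) * (W3 * W3))
  + (C0%:~R * C2%:~R) * ((W0 * W0 * W2) * (W2))
  + (C0%:~R * C2%:~R * A3%:~R) * ((W0 * W0 * W2) * (W2 * W3))
  + (C0%:~R * C2%:~R * C3%:~R) * ((W0 * W0 * W2) * (W2 * W3 * W3))
  + (C0%:~R * A1%:~R) * ((W0 * W0 * W1) * (1))
  + (C0%:~R * A1%:~R * A3%:~R) * ((W0 * W0 * W1) * (W3))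
  + (C0%:~R * A1%:~R * C3%:~R) * ((W0 * W0 * W1) * (W3 * W3))
  + (C0%:~R * A1%:~R * A2%:~R) * ((W0 * W0 * W1) * (W2))
  + (C0%:~R * A1%:~R * A2%:~R * A3%:~R) * ((W0 * W0 * W1) * (W2 * W3))
  + (C0%:~R * A1%:~R * A2%:~R * C3%:~R) * ((W0 * W0 * W1) * (W2 * W3 * W3))
  + (C0%:~R * A1%:~R * C2%:~R) * ((W0 * W0 * W1) * (W2 * W2))
  + (C0%:~R * A1%:~R * C2%:~R * A3%:~R) * ((W0 * W0 * W1) * (W2 * W2 * W3))
  + (C0%:~R * A1%:~R * C2%:~R * C3%:~R) * ((W0 * W0 * W1) * (W2 * W2 * W3 * W3))
  + (C0%:~R * C1%:~R) * ((W0 * W0 * W1) * (W1))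
  + (C0%:~R * C1%:~R * A3%:~R) * ((W0 * W0 * W1) * (W1 * W3))
  + (C0%:~R * C1%:~R * C3%:~R) * ((W0 * W0 * W1) * (W1 * W3 * W3))
  + (C0%:~R * C1%:~R * A2%:~R) * ((W0 * W0 * W1) * (W1 * W2))
  + (C0%:~R * C1%:~R * A2%:~R * A3%:~R) * ((W0 * W0 * W1) * (W1 * W2 * W3))
  + (C0%:~R * C1%:~R * A2%:~R * C3%:~R) * ((W0 * W0 * W1) * (W1 * W2 * W3 * W3))
  + (C0%:~R * C1%:~R * C2%:~R) * ((W0 * W0 * W1) * (W1 * W2 * W2))
  + (C0%:~R * C1%:~R * C2%:~R * A3%:~R) * ((W0 * W0 * W1) * (W1 * W2 * W2 * W3))
  + (C0%:~R * C1%:~R * C2%:~R * C3%:~R) * ((W0 * W0 * W1) * (W1 * W2 * W2 * W3 * W3))).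
Proof. rewrite !rmorphM /=. ring. Qed.

Lemma trunc4_high (A0 A1 A2 A3 C0 C1 C2 C3 : int) :
  let W0 := wvar o0 in let W1 := wvar o1 in let W2 := wvar o2 in let W3 := wvar o3 in
  high ((A2%:~R * C3%:~R) * ((W2 * W3 * W3) * (1))
  + (C2%:~R * A3%:~R) * ((W2 * W2 * W3) * (1))
  + (C2%:~R * C3%:~R) * ((W2 * W2 * W3) * (W3))
  + (A1%:~R * C3%:~R) * ((W1 * W3 * W3) * (1))
  + (A1%:~R * A2%:~R * A3%:~R) * ((W1 * W2 * W3) * (1))
  + (A1%:~R * A2%:~R * C3%:~R) * ((W1 * W2 * W3) * (W3))
  + (A1%:~R * C2%:~R) * ((W1 * W2 * W2) * (1))
  + (A1%:~R * C2%:~R * A3%:~R) * ((W1 * W2 * W2) * (W3))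
  + (A1%:~R * C2%:~R * C3%:~R) * ((W1 * W2 * W2) * (W3 * W3))
  + (C1%:~R * A3%:~R) * ((W1 * W1 * W3) * (1))
  + (C1%:~R * C3%:~R) * ((W1 * W1 * W3) * (W3))
  + (C1%:~R * A2%:~R) * ((W1 * W1 * W2) * (1))
  + (C1%:~R * A2%:~R * A3%:~R) * ((W1 * W1 * W2) * (W3))
  + (C1%:~R * A2%:~R * C3%:~R) * ((W1 * W1 * W2) * (W3 * W3))
  + (C1%:~R * C2%:~R) * ((W1 * W1 * W2) * (W2))
  + (C1%:~R * C2%:~R * A3%:~R) * ((W1 * W1 * W2) * (W2 * W3))
  + (C1%:~R * C2%:~R * C3%:~R) * ((W1 * W1 * W2) * (W2 * W3 * W3))
  + (A0%:~R * C3%:~R) * ((W0 * W3 * W3) * (1))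
  + (A0%:~R * A2%:~R * A3%:~R) * ((W0 * W2 * W3) * (1))
  + (A0%:~R * A2%:~R * C3%:~R) * ((W0 * W2 * W3) * (W3))
  + (A0%:~R * C2%:~R) * ((W0 * W2 * W2) * (1))
  + (A0%:~R * C2%:~R * A3%:~R) * ((W0 * W2 * W2) * (W3))
  + (A0%:~R * C2%:~R * C3%:~R) * ((W0 * W2 * W2) * (W3 * W3))
  + (A0%:~R * A1%:~R * A3%:~R) * ((W0 * W1 * W3) * (1))
  + (A0%:~R * A1%:~R * C3%:~R) * ((W0 * W1 * W3) * (W3))
  + (A0%:~R * A1%:~R * A2%:~R) * ((W0 * W1 * W2) * (1))
  + (A0%:~R * A1%:~R * A2%:~R * A3%:~R) * ((W0 * W1 * W2) * (W3))
  + (A0%:~R * A1%:~R * A2%:~R * C3%:~R) * ((W0 * W1 * W2) * (W3 * W3))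
  + (A0%:~R * A1%:~R * C2%:~R) * ((W0 * W1 * W2) * (W2))
  + (A0%:~R * A1%:~R * C2%:~R * A3%:~R) * ((W0 * W1 * W2) * (W2 * W3))
  + (A0%:~R * A1%:~R * C2%:~R * C3%:~R) * ((W0 * W1 * W2) * (W2 * W3 * W3))
  + (A0%:~R * C1%:~R) * ((W0 * W1 * W1) * (1))
  + (A0%:~R * C1%:~R * A3%:~R) * ((W0 * W1 * W1) * (W3))
  + (A0%:~R * C1%:~R * C3%:~R) * ((W0 * W1 * W1) * (W3 * W3))
  + (A0%:~R * C1%:~R * A2%:~R) * ((W0 * W1 * W1) * (W2))
  + (A0%:~R * C1%:~R * A2%:~R * A3%:~R) * ((W0 * W1 * W1) * (W2 * W3))
  + (A0%:~R * C1%:~R * A2%:~R * C3%:~R) * ((W0 * W1 * W1) * (W2 * W3 * W3))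
  + (A0%:~R * C1%:~R * C2%:~R) * ((W0 * W1 * W1) * (W2 * W2))
  + (A0%:~R * C1%:~R * C2%:~R * A3%:~R) * ((W0 * W1 * W1) * (W2 * W2 * W3))
  + (A0%:~R * C1%:~R * C2%:~R * C3%:~R) * ((W0 * W1 * W1) * (W2 * W2 * W3 * W3))
  + (C0%:~R * A3%:~R) * ((W0 * W0 * W3) * (1))
  + (C0%:~R * C3%:~R) * ((W0 * W0 * W3) * (W3))
  + (C0%:~R * A2%:~R) * ((W0 * W0 * W2) * (1))
  + (C0%:~R * A2%:~R * A3%:~R) * ((W0 * W0 * W2) * (W3))
  + (C0%:~R * A2%:~R * C3%:~R) * ((W0 * W0 * W2) * (W3 * W3))
  + (C0%:~R * C2%:~R) * ((W0 * W0 * W2) * (W2))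
  + (C0%:~R * C2%:~R * A3%:~R) * ((W0 * W0 * W2) * (W2 * W3))
  + (C0%:~R * C2%:~R * C3%:~R) * ((W0 * W0 * W2) * (W2 * W3 * W3))
  + (C0%:~R * A1%:~R) * ((W0 * W0 * W1) * (1))
  + (C0%:~R * A1%:~R * A3%:~R) * ((W0 * W0 * W1) * (W3))
  + (C0%:~R * A1%:~R * C3%:~R) * ((W0 * W0 * W1) * (W3 * W3))
  + (C0%:~R * A1%:~R * A2%:~R) * ((W0 * W0 * W1) * (W2))
  + (C0%:~R * A1%:~R * A2%:~R * A3%:~R) * ((W0 * W0 * W1) * (W2 * W3))
  + (C0%:~R * A1%:~R * A2%:~R * C3%:~R) * ((W0 * W0 * W1) * (W2 * W3 * W3))
  + (C0%:~R * A1%:~R * C2%:~R) * ((W0 * W0 * W1) * (W2 * W2))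
  + (C0%:~R * A1%:~R * C2%:~R * A3%:~R) * ((W0 * W0 * W1) * (W2 * W2 * W3))
  + (C0%:~R * A1%:~R * C2%:~R * C3%:~R) * ((W0 * W0 * W1) * (W2 * W2 * W3 * W3))
  + (C0%:~R * C1%:~R) * ((W0 * W0 * W1) * (W1))
  + (C0%:~R * C1%:~R * A3%:~R) * ((W0 * W0 * W1) * (W1 * W3))
  + (C0%:~R * C1%:~R * C3%:~R) * ((W0 * W0 * W1) * (W1 * W3 * W3))
  + (C0%:~R * C1%:~R * A2%:~R) * ((W0 * W0 * W1) * (W1 * W2))
  + (C0%:~R * C1%:~R * A2%:~R * A3%:~R) * ((W0 * W0 * W1) * (W1 * W2 * W3))
  + (C0%:~R * C1%:~R * A2%:~R * C3%:~R) * ((W0 * W0 * W1) * (W1 * W2 * W3 * W3))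
  + (C0%:~R * C1%:~R * C2%:~R) * ((W0 * W0 * W1) * (W1 * W2 * W2))
  + (C0%:~R * C1%:~R * C2%:~R * A3%:~R) * ((W0 * W0 * W1) * (W1 * W2 * W2 * W3))
  + (C0%:~R * C1%:~R * C2%:~R * C3%:~R) * ((W0 * W0 * W1) * (W1 * W2 * W2 * W3 * W3))).
Proof.
move=> W0 W1 W2 W3.
repeat match goal with
  | |- high (_ + _) => apply: highD
  | |- high (_ * _) => apply: high_mull; apply: high_mulr; apply: high_cube
  end.
Qed.

Definition T2 (l : weight) : Sym := (ci (l ord0 o0))%:~R * (wvar o0 * wvar o0) + (ci (l ord0 o1))%:~R * (wvar o1 * wvar o1) + (ci (l ord0 o2))%:~R * (wvar o2 * wvar o2) + (ci (l ord0 o3))%:~R * (wvar o3 * wvar o3) + (l ord0 o0 * l ord0 o1)%:~R * (wvar o0 * wvar o1) + (l ord0 o0 * l ord0 o2)%:~R * (wvar o0 * wvar o2) + (l ord0 o0 * l ord0 o3)%:~R * (wvar o0 * wvar o3) + (l ord0 o1 * l ord0 o2)%:~R * (wvar o1 * wvar o2) + (l ord0 o1 * l ord0 o3)%:~R * (wvar o1 * wvar o3) + (l ord0 o2 * l ord0 o3)%:~R * (wvar o2 * wvar o3).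

Definition Gf (l : weight) (i : 'I_4) : Sym :=
  if 0 <= l ord0 i then (1 + wvar i + wvar i ^+ 2) ^+ `|l ord0 i|%N
  else (1 - wvar i) ^+ `|l ord0 i|%N.

Lemma prod4 (F : 'I_4 -> Sym) : \prod_(i < 4) F i = F o0 * (F o1 * (F o2 * F o3)).
Proof.
rewrite !big_ord_recl big_ord0 mulr1.
by congr (F _ * (F _ * (F _ * F _))); apply: val_inj.
Qed.

Lemma chern_prod l : chern_img l = Gf l o0 * (Gf l o1 * (Gf l o2 * Gf l o3)).
Proof. exact: (prod4 (Gf l)). Qed.

Lemma deg2_one : deg2 1 = 0.
Proof. by rewrite -mpolyC1E deg2U mdeg1. Qed.

Lemma deg2_w i : deg2 (wvar i) = 0.
Proof. by rewrite /wvar deg2U mdegU. Qed.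

Lemma deg2_ww i j : deg2 (wvar i * wvar j) = wvar i * wvar j.
Proof. by rewrite wvarM deg2U mdegM !mdegU. Qed.

Lemma deg2_zl (z : int) p : deg2 (z%:~R * p) = z%:~R * deg2 p.
Proof. by rewrite !mulrzl raddfMz. Qed.

Lemma cube3 i : wvar i ^+ 3 = wvar i * wvar i * wvar i.
Proof. by rewrite exprSr exprSr expr1. Qed.

Lemma high_E i (r X : Sym) : high (wvar i ^+ 3 * r * X).
Proof.
have h3 : high (wvar i ^+ 3) by rewrite cube3; exact: high_cube.
exact: (high_mulr X (high_mulr r h3)).
Qed.

Lemma deg2_addh p h : high h -> deg2 (p + h) = deg2 p.
Proof. by move=> hh; rewrite raddfD /= (deg2_high hh) addr0. Qed.

Lemma deg2_t (z : int) i j p :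
  deg2 (p + z%:~R * (wvar i * wvar j)) = deg2 p + z%:~R * (wvar i * wvar j).
Proof. by rewrite raddfD /= deg2_zl deg2_ww. Qed.

Lemma deg2_l (z : int) i p : deg2 (p + z%:~R * wvar i) = deg2 p.
Proof. by rewrite raddfD /= deg2_zl deg2_w mulr0 addr0. Qed.


Lemma deg2_final (R : comNzRingType) (d : {additive R -> R})
  (hz : forall (z : int) p, d (z%:~R * p) = z%:~R * d p) (hone : d 1 = 0)
  (A0 A1 A2 A3 C0 C1 C2 C3 : int) (W0 W1 W2 W3 : R) (h0 : d W0 = 0) (h1 : d W1 = 0) (h2 : d W2 = 0) (h3 : d W3 = 0)
  (h00 : d (W0 * W0) = W0 * W0) (h01 : d (W0 * W1) = W0 * W1) (h02 : d (W0 * W2) = W0 * W2) (h03 : d (W0 * W3) = W0 * W3) (h11 : d (W1 * W1) = W1 * W1) (h12 : d (W1 * W2) = W1 * W2) (h13 : d (W1 * W3) = W1 * W3) (h22 : d (W2 * W2) = W2 * W2) (h23 : d (W2 * W3) = W2 * W3) (h33 : d (W3 * W3) = W3 * W3) :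
  d (1 + (A0%:~R * W0 + A1%:~R * W1 + A2%:~R * W2 + A3%:~R * W3) + (C0%:~R * (W0 * W0) + C1%:~R * (W1 * W1) + C2%:~R * (W2 * W2) + C3%:~R * (W3 * W3) + (A0 * A1)%:~R * (W0 * W1) + (A0 * A2)%:~R * (W0 * W2) + (A0 * A3)%:~R * (W0 * W3) + (A1 * A2)%:~R * (W1 * W2) + (A1 * A3)%:~R * (W1 * W3) + (A2 * A3)%:~R * (W2 * W3))) = C0%:~R * (W0 * W0) + C1%:~R * (W1 * W1) + C2%:~R * (W2 * W2) + C3%:~R * (W3 * W3) + (A0 * A1)%:~R * (W0 * W1) + (A0 * A2)%:~R * (W0 * W2) + (A0 * A3)%:~R * (W0 * W3) + (A1 * A2)%:~R * (W1 * W2) + (A1 * A3)%:~R * (W1 * W3) + (A2 * A3)%:~R * (W2 * W3).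
Proof.
rewrite !raddfD /= hone !hz h0 h1 h2 h3 h00 h01 h02 h03 h11 h12 h13 h22 h23 h33; ring.
Qed.

Lemma expand4 (L0 L1 L2 L3 E0 E1 E2 E3 : Sym) :
  (L0 + E0) * ((L1 + E1) * ((L2 + E2) * (L3 + E3))) = L0 * L1 * L2 * L3 +
   (E0 * ((L1 + E1) * (L2 + E2) * (L3 + E3)) + E1 * (L0 * (L2 + E2) * (L3 + E3))
  + E2 * (L0 * L1 * (L3 + E3)) + E3 * (L0 * L1 * L2)).
Proof. ring. Qed.

Lemma facG l i : exists r, Gf l i =
  1 + (l ord0 i)%:~R * wvar i + (ci (l ord0 i))%:~R * wvar i ^+ 2 + wvar i ^+ 3 * r.
Proof. exact: fac. Qed.

Lemma deg2_chern l : deg2 (chern_img l) = T2 l.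
Proof.
rewrite chern_prod.
have [r0 E0] := facG l o0.
have [r1 E1] := facG l o1.
have [r2 E2] := facG l o2.
have [r3 E3] := facG l o3.
rewrite E0 E1 E2 E3.
rewrite expand4 deg2_addh; last first.
  repeat match goal with
  | |- high (_ + _) => apply: highD
  | |- _ => apply: high_E
  end.
rewrite trunc4 deg2_addh; last exact: trunc4_high.
rewrite (@deg2_final _ _ deg2_zl deg2_one _ _ _ _ _ _ _ _ _ _ _ _ (deg2_w o0) (deg2_w o1) (deg2_w o2) (deg2_w o3) (deg2_ww o0 o0) (deg2_ww o0 o1) (deg2_ww o0 o2) (deg2_ww o0 o3) (deg2_ww o1 o1) (deg2_ww o1 o2) (deg2_ww o1 o3) (deg2_ww o2 o2) (deg2_ww o2 o3) (deg2_ww o3 o3)).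
rewrite /T2; reflexivity.
Qed.

Definition gkt (k : nat) (t : T4) : int :=
  let: (x0, x1, x2, x3) := t in
  match k with
  | 0 => ci x0 | 1 => ci x1 | 2 => ci x2 | 3 => ci x3
  | 4 => x0 * x1 | 5 => x0 * x2 | 6 => x0 * x3
  | 7 => x1 * x2 | 8 => x1 * x3 | _ => x2 * x3
  end.

Definition gk (k : nat) (l : weight) : int := gkt k (tup l).

Definition Mk (k : nat) : Sym :=
  match k with
  | 0 => wvar o0 * wvar o0 | 1 => wvar o1 * wvar o1 | 2 => wvar o2 * wvar o2
  | 3 => wvar o3 * wvar o3
  | 4 => wvar o0 * wvar o1 | 5 => wvar o0 * wvar o2 | 6 => wvar o0 * wvar o3
  | 7 => wvar o1 * wvar o2 | 8 => wvar o1 * wvar o3 | _ => wvar o2 * wvar o3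
  end.

Lemma T2E l : T2 l = \sum_(k <- iota 0 10) (gk k l)%:~R * Mk k.
Proof.
rewrite /T2 /= !big_cons big_nil /gk /Mk /gkt /tup /=.
move: (wvar o0) (wvar o1) (wvar o2) (wvar o3) => W0 W1 W2 W3.
ring.
Qed.

Lemma sum_swap (R : comNzRingType) (I J : Type) (s : seq I) (t : seq J)
  (F : I -> int) (g : J -> I -> int) (M : J -> R) :
  \sum_(a <- s) (F a)%:~R * \sum_(k <- t) (g k a)%:~R * M k =
  \sum_(k <- t) (\sum_(a <- s) F a * g k a)%:~R * M k.
Proof.
under eq_bigr do rewrite mulr_sumr.
rewrite exchange_big; apply: eq_bigr => k _ /=.
rewrite rmorph_sum mulr_suml; apply: eq_bigr => a _.
rewrite rmorphM /=; ring.
Qed.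

Lemma deg2Z (c : int) p : deg2 (c *: p) = c%:~R * deg2 p.
Proof. by rewrite -[c in LHS]intz scaler_int raddfMz mulrzl. Qed.

Lemma c2E f : c2 f = \sum_(k <- iota 0 10) (II (gk k) f)%:~R * Mk k.
Proof.
rewrite /c2 raddf_sum /=.
rewrite (eq_bigr (fun a => (f@_a)%:~R * \sum_(k <- iota 0 10) (gk k a)%:~R * Mk k)); last first.
  by move=> a _; rewrite deg2Z deg2_chern T2E.
by rewrite sum_swap.
Qed.

Lemma tup_aSw a ws b : tup (a + Sw ws b) = addt (tup a) (foldr rf (tup b) ws).
Proof. by rewrite tupD tup_Sw. Qed.

Definition q4Pt (t : T4) : int := let: (x0, x1, x2, x3) := t in (4) * x3 * x3 + (4) * x2 * x3 + (4) * x2 * x2 + (8) * x1 * x3 + (8) * x1 * x2 + (8) * x1 * x1 + (4) * x0 * x3 + (4) * x0 * x2 + (8) * x0 * x1 + (4) * x0 * x0.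
Definition q4P (l : weight) : int := q4Pt (tup l).

Definition QiPt (t : T4) : int := let: (x0, x1, x2, x3) := t in (-40) * x3 + (-30) * x3 * x3 + (31) * x3 * x3 * x3 + (-48) * x2 + (-78) * x2 * x3 + (51) * x2 * x3 * x3 + (-6) * x2 * x2 + (-27) * x2 * x2 * x2 + (-64) * x1 + (-108) * x1 * x3 + (108) * x1 * x3 * x3 + (-72) * x1 * x2 + (48) * x1 * x2 * x3 + (-84) * x1 * x2 * x2 + (-72) * x1 * x1 + (84) * x1 * x1 * x3 + (-72) * x1 * x1 * x2 + (-8) * x1 * x1 * x1 + (-40) * x0 + (-18) * x0 * x3 + (-90) * x0 * x2 + (18) * x0 * x2 * x3 + (9) * x0 * x2 * x2 + (-84) * x0 * x1 + (-24) * x0 * x1 * x3 + (24) * x0 * x1 * x2 + (-12) * x0 * x1 * x1 + (-18) * x0 * x0 + (-57) * x0 * x0 * x3 + (54) * x0 * x0 * x2 + x0 * x0 * x0.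
Definition QiP (l : weight) : int := QiPt (tup l).

Definition HpPt (t : T4) : int := let: (x0, x1, x2, x3) := t in (-160) * x3 + (-132) * x3 * x3 + (124) * x3 * x3 * x3 + (-192) * x2 + (-324) * x2 * x3 + (204) * x2 * x3 * x3 + (-36) * x2 * x2 + (-108) * x2 * x2 * x2 + (-256) * x1 + (-456) * x1 * x3 + (432) * x1 * x3 * x3 + (-312) * x1 * x2 + (192) * x1 * x2 * x3 + (-336) * x1 * x2 * x2 + (-312) * x1 * x1 + (336) * x1 * x1 * x3 + (-288) * x1 * x1 * x2 + (-32) * x1 * x1 * x1 + (-160) * x0 + (-84) * x0 * x3 + (-372) * x0 * x2 + (72) * x0 * x2 * x3 + (36) * x0 * x2 * x2 + (-360) * x0 * x1 + (-96) * x0 * x1 * x3 + (96) * x0 * x1 * x2 + (-48) * x0 * x1 * x1 + (-84) * x0 * x0 + (-228) * x0 * x0 * x3 + (216) * x0 * x0 * x2 + (4) * x0 * x0 * x0.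
Definition HpP (l : weight) : int := HpPt (tup l).

Definition linP0t (t : T4) : int := let: (x0, x1, x2, x3) := t in x0.
Definition linP0 (l : weight) : int := linP0t (tup l).

Definition linP1t (t : T4) : int := let: (x0, x1, x2, x3) := t in x1.
Definition linP1 (l : weight) : int := linP1t (tup l).

Definition linP2t (t : T4) : int := let: (x0, x1, x2, x3) := t in x2.
Definition linP2 (l : weight) : int := linP2t (tup l).

Definition linP3t (t : T4) : int := let: (x0, x1, x2, x3) := t in x3.
Definition linP3 (l : weight) : int := linP3t (tup l).

Definition qP00t (t : T4) : int := let: (x0, x1, x2, x3) := t in 16 * x0 * x0 - (2) * q4Pt (x0, x1, x2, x3).
Definition qP00 (l : weight) : int := qP00t (tup l).

Definition qP01t (t : T4) : int := let: (x0, x1, x2, x3) := t in 16 * x0 * x1 - (-1) * q4Pt (x0, x1, x2, x3).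
Definition qP01 (l : weight) : int := qP01t (tup l).

Definition qP02t (t : T4) : int := let: (x0, x1, x2, x3) := t in 16 * x0 * x2 - (0) * q4Pt (x0, x1, x2, x3).
Definition qP02 (l : weight) : int := qP02t (tup l).

Definition qP03t (t : T4) : int := let: (x0, x1, x2, x3) := t in 16 * x0 * x3 - (0) * q4Pt (x0, x1, x2, x3).
Definition qP03 (l : weight) : int := qP03t (tup l).

Definition qP11t (t : T4) : int := let: (x0, x1, x2, x3) := t in 16 * x1 * x1 - (2) * q4Pt (x0, x1, x2, x3).
Definition qP11 (l : weight) : int := qP11t (tup l).

Definition qP12t (t : T4) : int := let: (x0, x1, x2, x3) := t in 16 * x1 * x2 - (-1) * q4Pt (x0, x1, x2, x3).
Definition qP12 (l : weight) : int := qP12t (tup l).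

Definition qP13t (t : T4) : int := let: (x0, x1, x2, x3) := t in 16 * x1 * x3 - (-1) * q4Pt (x0, x1, x2, x3).
Definition qP13 (l : weight) : int := qP13t (tup l).

Definition qP22t (t : T4) : int := let: (x0, x1, x2, x3) := t in 16 * x2 * x2 - (2) * q4Pt (x0, x1, x2, x3).
Definition qP22 (l : weight) : int := qP22t (tup l).

Definition qP23t (t : T4) : int := let: (x0, x1, x2, x3) := t in 16 * x2 * x3 - (0) * q4Pt (x0, x1, x2, x3).
Definition qP23 (l : weight) : int := qP23t (tup l).

Definition qP33t (t : T4) : int := let: (x0, x1, x2, x3) := t in 16 * x3 * x3 - (2) * q4Pt (x0, x1, x2, x3).
Definition qP33 (l : weight) : int := qP33t (tup l).

Definition Ws_HpP : seq (seq 'I_4) := [:: [:: ];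
  [:: o3; o1; o2; o0; o1; o3; o0; o1; o2; o0; o1; o0];
  [:: o3; o1; o2; o0; o1; o0];
  [:: o3; o1; o2; o0; o1; o3; o0; o1; o2; o0; o1; o0; o3; o1; o2; o0; o1; o0];
  [:: o2; o1; o3; o2; o1; o0];
  [:: o3; o1; o2; o0; o1; o3; o0; o1; o2; o0; o1; o0; o2; o1; o3; o2; o1; o0];
  [:: o3; o1; o2; o0; o1; o0; o2; o1; o3; o2; o1; o0];
  [:: o3; o1; o2; o0; o1; o3; o0; o1; o2; o0; o1; o0; o3; o1; o2; o0; o1; o0; o2; o1; o3; o2; o1; o0]].

Definition Ws_linP0 : seq (seq 'I_4) := [:: [:: ];
  [:: o3; o1; o2; o0; o1; o3; o0; o1; o2; o0; o1; o0]].

Definition Ws_linP1 : seq (seq 'I_4) := [:: [:: ];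
  [:: o3; o1; o2; o0; o1; o3; o0; o1; o2; o0; o1; o0]].

Definition Ws_linP2 : seq (seq 'I_4) := [:: [:: ];
  [:: o3; o1; o2; o0; o1; o3; o0; o1; o2; o0; o1; o0]].

Definition Ws_linP3 : seq (seq 'I_4) := [:: [:: ];
  [:: o3; o1; o2; o0; o1; o3; o0; o1; o2; o0; o1; o0]].

Definition Ws_qP00 : seq (seq 'I_4) := [:: [:: ];
  [:: o3; o1; o2; o0; o1; o3; o0; o1; o2; o0; o1; o0];
  [:: o1; o2; o0; o1];
  [:: o3; o1; o2; o0; o1; o3; o0; o1; o2; o0; o1; o0; o1; o2; o0; o1];
  [:: o1; o3; o0; o1];
  [:: o3; o1; o2; o0; o1; o3; o0; o1; o2; o0; o1; o0; o1; o3; o0; o1];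
  [:: o1; o2; o0; o1; o1; o3; o0; o1];
  [:: o3; o1; o2; o0; o1; o3; o0; o1; o2; o0; o1; o0; o1; o2; o0; o1; o1; o3; o0; o1]].

Definition Ws_qP01 : seq (seq 'I_4) := [:: [:: ];
  [:: o3; o1; o2; o0; o1; o3; o0; o1; o2; o0; o1; o0];
  [:: o2; o1];
  [:: o3; o1; o2; o0; o1; o3; o0; o1; o2; o0; o1; o0; o2; o1];
  [:: o2; o1; o3; o0; o1; o0];
  [:: o3; o1; o2; o0; o1; o3; o0; o1; o2; o0; o1; o0; o2; o1; o3; o0; o1; o0];
  [:: o2; o1; o2; o1; o3; o0; o1; o0];
  [:: o3; o1; o2; o0; o1; o3; o0; o1; o2; o0; o1; o0; o2; o1; o2; o1; o3; o0; o1; o0]].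

Definition Ws_qP02 : seq (seq 'I_4) := [:: [:: ];
  [:: o3; o1; o2; o0; o1; o3; o0; o1; o2; o0; o1; o0];
  [:: o0];
  [:: o3; o1; o2; o0; o1; o3; o0; o1; o2; o0; o1; o0; o0]].

Definition Ws_qP03 : seq (seq 'I_4) := [:: [:: ];
  [:: o3; o1; o2; o0; o1; o3; o0; o1; o2; o0; o1; o0];
  [:: o0];
  [:: o3; o1; o2; o0; o1; o3; o0; o1; o2; o0; o1; o0; o0]].

Definition Ws_qP11 : seq (seq 'I_4) := [:: [:: ];
  [:: o3; o1; o2; o0; o1; o3; o0; o1; o2; o0; o1; o0];
  [:: o2; o0];
  [:: o3; o1; o2; o0; o1; o3; o0; o1; o2; o0; o1; o0; o2; o0];
  [:: o3; o0];
  [:: o3; o1; o2; o0; o1; o3; o0; o1; o2; o0; o1; o0; o3; o0];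
  [:: o2; o0; o3; o0];
  [:: o3; o1; o2; o0; o1; o3; o0; o1; o2; o0; o1; o0; o2; o0; o3; o0]].

Definition Ws_qP12 : seq (seq 'I_4) := [:: [:: ];
  [:: o3; o1; o2; o0; o1; o3; o0; o1; o2; o0; o1; o0];
  [:: o1; o0];
  [:: o3; o1; o2; o0; o1; o3; o0; o1; o2; o0; o1; o0; o1; o0];
  [:: o1; o3; o1; o2; o1; o0];
  [:: o3; o1; o2; o0; o1; o3; o0; o1; o2; o0; o1; o0; o1; o3; o1; o2; o1; o0];
  [:: o1; o0; o1; o3; o1; o2; o1; o0];
  [:: o3; o1; o2; o0; o1; o3; o0; o1; o2; o0; o1; o0; o1; o0; o1; o3; o1; o2; o1; o0]].

Definition Ws_qP13 : seq (seq 'I_4) := [:: [:: ];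
  [:: o3; o1; o2; o0; o1; o3; o0; o1; o2; o0; o1; o0];
  [:: o1; o0];
  [:: o3; o1; o2; o0; o1; o3; o0; o1; o2; o0; o1; o0; o1; o0];
  [:: o2; o1; o3; o2; o1; o0];
  [:: o3; o1; o2; o0; o1; o3; o0; o1; o2; o0; o1; o0; o2; o1; o3; o2; o1; o0];
  [:: o1; o0; o2; o1; o3; o2; o1; o0];
  [:: o3; o1; o2; o0; o1; o3; o0; o1; o2; o0; o1; o0; o1; o0; o2; o1; o3; o2; o1; o0]].

Definition Ws_qP22 : seq (seq 'I_4) := [:: [:: ];
  [:: o3; o1; o2; o0; o1; o3; o0; o1; o2; o0; o1; o0];
  [:: o1; o2; o0; o1];
  [:: o3; o1; o2; o0; o1; o3; o0; o1; o2; o0; o1; o0; o1; o2; o0; o1];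
  [:: o1; o3; o0; o1];
  [:: o3; o1; o2; o0; o1; o3; o0; o1; o2; o0; o1; o0; o1; o3; o0; o1];
  [:: o1; o2; o0; o1; o1; o3; o0; o1];
  [:: o3; o1; o2; o0; o1; o3; o0; o1; o2; o0; o1; o0; o1; o2; o0; o1; o1; o3; o0; o1]].

Definition Ws_qP23 : seq (seq 'I_4) := [:: [:: ];
  [:: o3; o1; o2; o0; o1; o3; o0; o1; o2; o0; o1; o0];
  [:: o2];
  [:: o3; o1; o2; o0; o1; o3; o0; o1; o2; o0; o1; o0; o2]].

Definition Ws_qP33 : seq (seq 'I_4) := [:: [:: ];
  [:: o3; o1; o2; o0; o1; o3; o0; o1; o2; o0; o1; o0];
  [:: o1; o2; o0; o1];
  [:: o3; o1; o2; o0; o1; o3; o0; o1; o2; o0; o1; o0; o1; o2; o0; o1];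
  [:: o1; o3; o0; o1];
  [:: o3; o1; o2; o0; o1; o3; o0; o1; o2; o0; o1; o0; o1; o3; o0; o1];
  [:: o1; o2; o0; o1; o1; o3; o0; o1];
  [:: o3; o1; o2; o0; o1; o3; o0; o1; o2; o0; o1; o0; o1; o2; o0; o1; o1; o3; o0; o1]].

Definition e0 : T4 := (1, 0, 0, 0).
Definition e1 : T4 := (0, 1, 0, 0).
Definition e2 : T4 := (0, 0, 1, 0).
Definition e3 : T4 := (0, 0, 0, 1).
Definition comb (k0 k1 k2 k3 : int) (u0 u1 u2 u3 : T4) : T4 :=
  (k0 * u0.1.1.1 + k1 * u1.1.1.1 + k2 * u2.1.1.1 + k3 * u3.1.1.1,
   k0 * u0.1.1.2 + k1 * u1.1.1.2 + k2 * u2.1.1.2 + k3 * u3.1.1.2,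
   k0 * u0.1.2 + k1 * u1.1.2 + k2 * u2.1.2 + k3 * u3.1.2,
   k0 * u0.2 + k1 * u1.2 + k2 * u2.2 + k3 * u3.2).

Lemma rf_lin i k0 k1 k2 k3 u0 u1 u2 u3 :
  rf i (comb k0 k1 k2 k3 u0 u1 u2 u3) = comb k0 k1 k2 k3 (rf i u0) (rf i u1) (rf i u2) (rf i u3).
Proof.
case: u0 => [[[x00 x01] x02] x03]; case: u1 => [[[x10 x11] x12] x13].
case: u2 => [[[x20 x21] x22] x23]; case: u3 => [[[x30 x31] x32] x33].
move: i; apply: ord4P; rewrite /comb /rf /=; congr (_, _, _, _); ring.
Qed.

Lemma foldr_lin ws b0 b1 b2 b3 : foldr rf (b0, b1, b2, b3) ws =
  comb b0 b1 b2 b3 (foldr rf e0 ws) (foldr rf e1 ws) (foldr rf e2 ws) (foldr rf e3 ws).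
Proof.
elim: ws => [|i ws IH] /=; first by rewrite /comb /=; congr (_, _, _, _); ring.
by rewrite IH rf_lin.
Qed.

Lemma mv_gen (Pt : T4 -> int) (Wl : seq (seq 'I_4)) :
  (forall a0 a1 a2 a3 b0 b1 b2 b3 : int,
     \sum_(ws <- Wl) Pt (addt (a0, a1, a2, a3) (foldr rf (b0, b1, b2, b3) ws)) =
     (size Wl)%:R * Pt (a0, a1, a2, a3)) ->
  forall a b, \sum_(ws <- Wl) Pt (tup (a + Sw ws b)) = (size Wl)%:R * Pt (tup a).
Proof.
move=> H a b.
rewrite (eq_bigr (fun ws => Pt (addt (tup a) (foldr rf (tup b) ws)))); last first.
  by move=> ws _; rewrite tup_aSw.
by case: (tup a) => [[[a0 a1] a2] a3]; case: (tup b) => [[[b0 b1] b2] b3]; apply: H.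
Qed.

Lemma mv_HpP a b : \sum_(ws <- Ws_HpP) HpP (a + Sw ws b) = (size Ws_HpP)%:R * HpP a.
Proof.
rewrite /HpP; apply: mv_gen => a0 a1 a2 a3 b0 b1 b2 b3.
rewrite /Ws_HpP /= !big_cons big_nil !(foldr_lin _ b0 b1 b2 b3).
rewrite (_ : foldr rf e0 [:: ] = (1, 0, 0, 0)); last by [].
rewrite (_ : foldr rf e1 [:: ] = (0, 1, 0, 0)); last by [].
rewrite (_ : foldr rf e2 [:: ] = (0, 0, 1, 0)); last by [].
rewrite (_ : foldr rf e3 [:: ] = (0, 0, 0, 1)); last by [].
rewrite (_ : foldr rf e0 [:: o3; o1; o2; o0; o1; o3; o0; o1; o2; o0; o1; o0] = ((-1), 0, 0, 0)); last by [].
rewrite (_ : foldr rf e1 [:: o3; o1; o2; o0; o1; o3; o0; o1; o2; o0; o1; o0] = (0, (-1), 0, 0)); last by [].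
rewrite (_ : foldr rf e2 [:: o3; o1; o2; o0; o1; o3; o0; o1; o2; o0; o1; o0] = (0, 0, (-1), 0)); last by [].
rewrite (_ : foldr rf e3 [:: o3; o1; o2; o0; o1; o3; o0; o1; o2; o0; o1; o0] = (0, 0, 0, (-1))); last by [].
rewrite (_ : foldr rf e0 [:: o3; o1; o2; o0; o1; o0] = (0, 1, (-1), (-1))); last by [].
rewrite (_ : foldr rf e1 [:: o3; o1; o2; o0; o1; o0] = (0, 1, 0, (-2))); last by [].
rewrite (_ : foldr rf e2 [:: o3; o1; o2; o0; o1; o0] = (1, 0, 0, (-1))); last by [].
rewrite (_ : foldr rf e3 [:: o3; o1; o2; o0; o1; o0] = (0, 1, 0, (-1))); last by [].
rewrite (_ : foldr rf e0 [:: o3; o1; o2; o0; o1; o3; o0; o1; o2; o0; o1; o0; o3; o1; o2; o0; o1; o0] = (0, (-1), 1, 1)); last by [].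
rewrite (_ : foldr rf e1 [:: o3; o1; o2; o0; o1; o3; o0; o1; o2; o0; o1; o0; o3; o1; o2; o0; o1; o0] = (0, (-1), 0, 2)); last by [].
rewrite (_ : foldr rf e2 [:: o3; o1; o2; o0; o1; o3; o0; o1; o2; o0; o1; o0; o3; o1; o2; o0; o1; o0] = ((-1), 0, 0, 1)); last by [].
rewrite (_ : foldr rf e3 [:: o3; o1; o2; o0; o1; o3; o0; o1; o2; o0; o1; o0; o3; o1; o2; o0; o1; o0] = (0, (-1), 0, 1)); last by [].
rewrite (_ : foldr rf e0 [:: o2; o1; o3; o2; o1; o0] = (1, (-1), 0, 0)); last by [].
rewrite (_ : foldr rf e1 [:: o2; o1; o3; o2; o1; o0] = (2, (-1), 0, 0)); last by [].
rewrite (_ : foldr rf e2 [:: o2; o1; o3; o2; o1; o0] = (1, (-1), 0, 1)); last by [].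
rewrite (_ : foldr rf e3 [:: o2; o1; o3; o2; o1; o0] = (1, 0, (-1), 0)); last by [].
rewrite (_ : foldr rf e0 [:: o3; o1; o2; o0; o1; o3; o0; o1; o2; o0; o1; o0; o2; o1; o3; o2; o1; o0] = ((-1), 1, 0, 0)); last by [].
rewrite (_ : foldr rf e1 [:: o3; o1; o2; o0; o1; o3; o0; o1; o2; o0; o1; o0; o2; o1; o3; o2; o1; o0] = ((-2), 1, 0, 0)); last by [].
rewrite (_ : foldr rf e2 [:: o3; o1; o2; o0; o1; o3; o0; o1; o2; o0; o1; o0; o2; o1; o3; o2; o1; o0] = ((-1), 1, 0, (-1))); last by [].
rewrite (_ : foldr rf e3 [:: o3; o1; o2; o0; o1; o3; o0; o1; o2; o0; o1; o0; o2; o1; o3; o2; o1; o0] = ((-1), 0, 1, 0)); last by [].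
rewrite (_ : foldr rf e0 [:: o3; o1; o2; o0; o1; o0; o2; o1; o3; o2; o1; o0] = (0, 0, (-1), 1)); last by [].
rewrite (_ : foldr rf e1 [:: o3; o1; o2; o0; o1; o0; o2; o1; o3; o2; o1; o0] = (0, 1, (-2), 0)); last by [].
rewrite (_ : foldr rf e2 [:: o3; o1; o2; o0; o1; o0; o2; o1; o3; o2; o1; o0] = (0, 1, (-1), 0)); last by [].
rewrite (_ : foldr rf e3 [:: o3; o1; o2; o0; o1; o0; o2; o1; o3; o2; o1; o0] = ((-1), 1, (-1), 0)); last by [].
rewrite (_ : foldr rf e0 [:: o3; o1; o2; o0; o1; o3; o0; o1; o2; o0; o1; o0; o3; o1; o2; o0; o1; o0; o2; o1; o3; o2; o1; o0] = (0, 0, 1, (-1))); last by [].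
rewrite (_ : foldr rf e1 [:: o3; o1; o2; o0; o1; o3; o0; o1; o2; o0; o1; o0; o3; o1; o2; o0; o1; o0; o2; o1; o3; o2; o1; o0] = (0, (-1), 2, 0)); last by [].
rewrite (_ : foldr rf e2 [:: o3; o1; o2; o0; o1; o3; o0; o1; o2; o0; o1; o0; o3; o1; o2; o0; o1; o0; o2; o1; o3; o2; o1; o0] = (0, (-1), 1, 0)); last by [].
rewrite (_ : foldr rf e3 [:: o3; o1; o2; o0; o1; o3; o0; o1; o2; o0; o1; o0; o3; o1; o2; o0; o1; o0; o2; o1; o3; o2; o1; o0] = (1, (-1), 1, 0)); last by [].
cbn [comb addt fst snd HpPt q4Pt]. ring.
Qed.

Lemma mv_linP0 a b : \sum_(ws <- Ws_linP0) linP0 (a + Sw ws b) = (size Ws_linP0)%:R * linP0 a.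
Proof.
rewrite /linP0; apply: mv_gen => a0 a1 a2 a3 b0 b1 b2 b3.
rewrite /Ws_linP0 /= !big_cons big_nil !(foldr_lin _ b0 b1 b2 b3).
rewrite (_ : foldr rf e0 [:: ] = (1, 0, 0, 0)); last by [].
rewrite (_ : foldr rf e1 [:: ] = (0, 1, 0, 0)); last by [].
rewrite (_ : foldr rf e2 [:: ] = (0, 0, 1, 0)); last by [].
rewrite (_ : foldr rf e3 [:: ] = (0, 0, 0, 1)); last by [].
rewrite (_ : foldr rf e0 [:: o3; o1; o2; o0; o1; o3; o0; o1; o2; o0; o1; o0] = ((-1), 0, 0, 0)); last by [].
rewrite (_ : foldr rf e1 [:: o3; o1; o2; o0; o1; o3; o0; o1; o2; o0; o1; o0] = (0, (-1), 0, 0)); last by [].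
rewrite (_ : foldr rf e2 [:: o3; o1; o2; o0; o1; o3; o0; o1; o2; o0; o1; o0] = (0, 0, (-1), 0)); last by [].
rewrite (_ : foldr rf e3 [:: o3; o1; o2; o0; o1; o3; o0; o1; o2; o0; o1; o0] = (0, 0, 0, (-1))); last by [].
cbn [comb addt fst snd linP0t q4Pt]. ring.
Qed.

Lemma mv_linP1 a b : \sum_(ws <- Ws_linP1) linP1 (a + Sw ws b) = (size Ws_linP1)%:R * linP1 a.
Proof.
rewrite /linP1; apply: mv_gen => a0 a1 a2 a3 b0 b1 b2 b3.
rewrite /Ws_linP1 /= !big_cons big_nil !(foldr_lin _ b0 b1 b2 b3).
rewrite (_ : foldr rf e0 [:: ] = (1, 0, 0, 0)); last by [].
rewrite (_ : foldr rf e1 [:: ] = (0, 1, 0, 0)); last by [].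
rewrite (_ : foldr rf e2 [:: ] = (0, 0, 1, 0)); last by [].
rewrite (_ : foldr rf e3 [:: ] = (0, 0, 0, 1)); last by [].
rewrite (_ : foldr rf e0 [:: o3; o1; o2; o0; o1; o3; o0; o1; o2; o0; o1; o0] = ((-1), 0, 0, 0)); last by [].
rewrite (_ : foldr rf e1 [:: o3; o1; o2; o0; o1; o3; o0; o1; o2; o0; o1; o0] = (0, (-1), 0, 0)); last by [].
rewrite (_ : foldr rf e2 [:: o3; o1; o2; o0; o1; o3; o0; o1; o2; o0; o1; o0] = (0, 0, (-1), 0)); last by [].
rewrite (_ : foldr rf e3 [:: o3; o1; o2; o0; o1; o3; o0; o1; o2; o0; o1; o0] = (0, 0, 0, (-1))); last by [].
cbn [comb addt fst snd linP1t q4Pt]. ring.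
Qed.

Lemma mv_linP2 a b : \sum_(ws <- Ws_linP2) linP2 (a + Sw ws b) = (size Ws_linP2)%:R * linP2 a.
Proof.
rewrite /linP2; apply: mv_gen => a0 a1 a2 a3 b0 b1 b2 b3.
rewrite /Ws_linP2 /= !big_cons big_nil !(foldr_lin _ b0 b1 b2 b3).
rewrite (_ : foldr rf e0 [:: ] = (1, 0, 0, 0)); last by [].
rewrite (_ : foldr rf e1 [:: ] = (0, 1, 0, 0)); last by [].
rewrite (_ : foldr rf e2 [:: ] = (0, 0, 1, 0)); last by [].
rewrite (_ : foldr rf e3 [:: ] = (0, 0, 0, 1)); last by [].
rewrite (_ : foldr rf e0 [:: o3; o1; o2; o0; o1; o3; o0; o1; o2; o0; o1; o0] = ((-1), 0, 0, 0)); last by [].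
rewrite (_ : foldr rf e1 [:: o3; o1; o2; o0; o1; o3; o0; o1; o2; o0; o1; o0] = (0, (-1), 0, 0)); last by [].
rewrite (_ : foldr rf e2 [:: o3; o1; o2; o0; o1; o3; o0; o1; o2; o0; o1; o0] = (0, 0, (-1), 0)); last by [].
rewrite (_ : foldr rf e3 [:: o3; o1; o2; o0; o1; o3; o0; o1; o2; o0; o1; o0] = (0, 0, 0, (-1))); last by [].
cbn [comb addt fst snd linP2t q4Pt]. ring.
Qed.

Lemma mv_linP3 a b : \sum_(ws <- Ws_linP3) linP3 (a + Sw ws b) = (size Ws_linP3)%:R * linP3 a.
Proof.
rewrite /linP3; apply: mv_gen => a0 a1 a2 a3 b0 b1 b2 b3.
rewrite /Ws_linP3 /= !big_cons big_nil !(foldr_lin _ b0 b1 b2 b3).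
rewrite (_ : foldr rf e0 [:: ] = (1, 0, 0, 0)); last by [].
rewrite (_ : foldr rf e1 [:: ] = (0, 1, 0, 0)); last by [].
rewrite (_ : foldr rf e2 [:: ] = (0, 0, 1, 0)); last by [].
rewrite (_ : foldr rf e3 [:: ] = (0, 0, 0, 1)); last by [].
rewrite (_ : foldr rf e0 [:: o3; o1; o2; o0; o1; o3; o0; o1; o2; o0; o1; o0] = ((-1), 0, 0, 0)); last by [].
rewrite (_ : foldr rf e1 [:: o3; o1; o2; o0; o1; o3; o0; o1; o2; o0; o1; o0] = (0, (-1), 0, 0)); last by [].
rewrite (_ : foldr rf e2 [:: o3; o1; o2; o0; o1; o3; o0; o1; o2; o0; o1; o0] = (0, 0, (-1), 0)); last by [].
rewrite (_ : foldr rf e3 [:: o3; o1; o2; o0; o1; o3; o0; o1; o2; o0; o1; o0] = (0, 0, 0, (-1))); last by [].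
cbn [comb addt fst snd linP3t q4Pt]. ring.
Qed.

Lemma mv_qP00 a b : \sum_(ws <- Ws_qP00) qP00 (a + Sw ws b) = (size Ws_qP00)%:R * qP00 a.
Proof.
rewrite /qP00; apply: mv_gen => a0 a1 a2 a3 b0 b1 b2 b3.
rewrite /Ws_qP00 /= !big_cons big_nil !(foldr_lin _ b0 b1 b2 b3).
rewrite (_ : foldr rf e0 [:: ] = (1, 0, 0, 0)); last by [].
rewrite (_ : foldr rf e1 [:: ] = (0, 1, 0, 0)); last by [].
rewrite (_ : foldr rf e2 [:: ] = (0, 0, 1, 0)); last by [].
rewrite (_ : foldr rf e3 [:: ] = (0, 0, 0, 1)); last by [].
rewrite (_ : foldr rf e0 [:: o3; o1; o2; o0; o1; o3; o0; o1; o2; o0; o1; o0] = ((-1), 0, 0, 0)); last by [].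
rewrite (_ : foldr rf e1 [:: o3; o1; o2; o0; o1; o3; o0; o1; o2; o0; o1; o0] = (0, (-1), 0, 0)); last by [].
rewrite (_ : foldr rf e2 [:: o3; o1; o2; o0; o1; o3; o0; o1; o2; o0; o1; o0] = (0, 0, (-1), 0)); last by [].
rewrite (_ : foldr rf e3 [:: o3; o1; o2; o0; o1; o3; o0; o1; o2; o0; o1; o0] = (0, 0, 0, (-1))); last by [].
rewrite (_ : foldr rf e0 [:: o1; o2; o0; o1] = (0, (-1), 1, 1)); last by [].
rewrite (_ : foldr rf e1 [:: o1; o2; o0; o1] = (0, (-1), 0, 2)); last by [].
rewrite (_ : foldr rf e2 [:: o1; o2; o0; o1] = (1, (-1), 0, 1)); last by [].
rewrite (_ : foldr rf e3 [:: o1; o2; o0; o1] = (0, 0, 0, 1)); last by [].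
rewrite (_ : foldr rf e0 [:: o3; o1; o2; o0; o1; o3; o0; o1; o2; o0; o1; o0; o1; o2; o0; o1] = (0, 1, (-1), (-1))); last by [].
rewrite (_ : foldr rf e1 [:: o3; o1; o2; o0; o1; o3; o0; o1; o2; o0; o1; o0; o1; o2; o0; o1] = (0, 1, 0, (-2))); last by [].
rewrite (_ : foldr rf e2 [:: o3; o1; o2; o0; o1; o3; o0; o1; o2; o0; o1; o0; o1; o2; o0; o1] = ((-1), 1, 0, (-1))); last by [].
rewrite (_ : foldr rf e3 [:: o3; o1; o2; o0; o1; o3; o0; o1; o2; o0; o1; o0; o1; o2; o0; o1] = (0, 0, 0, (-1))); last by [].
rewrite (_ : foldr rf e0 [:: o1; o3; o0; o1] = (0, (-1), 1, 1)); last by [].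
rewrite (_ : foldr rf e1 [:: o1; o3; o0; o1] = (0, (-1), 2, 0)); last by [].
rewrite (_ : foldr rf e2 [:: o1; o3; o0; o1] = (0, 0, 1, 0)); last by [].
rewrite (_ : foldr rf e3 [:: o1; o3; o0; o1] = (1, (-1), 1, 0)); last by [].
rewrite (_ : foldr rf e0 [:: o3; o1; o2; o0; o1; o3; o0; o1; o2; o0; o1; o0; o1; o3; o0; o1] = (0, 1, (-1), (-1))); last by [].
rewrite (_ : foldr rf e1 [:: o3; o1; o2; o0; o1; o3; o0; o1; o2; o0; o1; o0; o1; o3; o0; o1] = (0, 1, (-2), 0)); last by [].
rewrite (_ : foldr rf e2 [:: o3; o1; o2; o0; o1; o3; o0; o1; o2; o0; o1; o0; o1; o3; o0; o1] = (0, 0, (-1), 0)); last by [].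
rewrite (_ : foldr rf e3 [:: o3; o1; o2; o0; o1; o3; o0; o1; o2; o0; o1; o0; o1; o3; o0; o1] = ((-1), 1, (-1), 0)); last by [].
rewrite (_ : foldr rf e0 [:: o1; o2; o0; o1; o1; o3; o0; o1] = (1, 0, 0, 0)); last by [].
rewrite (_ : foldr rf e1 [:: o1; o2; o0; o1; o1; o3; o0; o1] = (2, (-1), 0, 0)); last by [].
rewrite (_ : foldr rf e2 [:: o1; o2; o0; o1; o1; o3; o0; o1] = (1, (-1), 0, 1)); last by [].
rewrite (_ : foldr rf e3 [:: o1; o2; o0; o1; o1; o3; o0; o1] = (1, (-1), 1, 0)); last by [].
rewrite (_ : foldr rf e0 [:: o3; o1; o2; o0; o1; o3; o0; o1; o2; o0; o1; o0; o1; o2; o0; o1; o1; o3; o0; o1] = ((-1), 0, 0, 0)); last by [].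
rewrite (_ : foldr rf e1 [:: o3; o1; o2; o0; o1; o3; o0; o1; o2; o0; o1; o0; o1; o2; o0; o1; o1; o3; o0; o1] = ((-2), 1, 0, 0)); last by [].
rewrite (_ : foldr rf e2 [:: o3; o1; o2; o0; o1; o3; o0; o1; o2; o0; o1; o0; o1; o2; o0; o1; o1; o3; o0; o1] = ((-1), 1, 0, (-1))); last by [].
rewrite (_ : foldr rf e3 [:: o3; o1; o2; o0; o1; o3; o0; o1; o2; o0; o1; o0; o1; o2; o0; o1; o1; o3; o0; o1] = ((-1), 1, (-1), 0)); last by [].
cbn [comb addt fst snd qP00t q4Pt]. ring.
Qed.

Lemma mv_qP01 a b : \sum_(ws <- Ws_qP01) qP01 (a + Sw ws b) = (size Ws_qP01)%:R * qP01 a.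
Proof.
rewrite /qP01; apply: mv_gen => a0 a1 a2 a3 b0 b1 b2 b3.
rewrite /Ws_qP01 /= !big_cons big_nil !(foldr_lin _ b0 b1 b2 b3).
rewrite (_ : foldr rf e0 [:: ] = (1, 0, 0, 0)); last by [].
rewrite (_ : foldr rf e1 [:: ] = (0, 1, 0, 0)); last by [].
rewrite (_ : foldr rf e2 [:: ] = (0, 0, 1, 0)); last by [].
rewrite (_ : foldr rf e3 [:: ] = (0, 0, 0, 1)); last by [].
rewrite (_ : foldr rf e0 [:: o3; o1; o2; o0; o1; o3; o0; o1; o2; o0; o1; o0] = ((-1), 0, 0, 0)); last by [].
rewrite (_ : foldr rf e1 [:: o3; o1; o2; o0; o1; o3; o0; o1; o2; o0; o1; o0] = (0, (-1), 0, 0)); last by [].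
rewrite (_ : foldr rf e2 [:: o3; o1; o2; o0; o1; o3; o0; o1; o2; o0; o1; o0] = (0, 0, (-1), 0)); last by [].
rewrite (_ : foldr rf e3 [:: o3; o1; o2; o0; o1; o3; o0; o1; o2; o0; o1; o0] = (0, 0, 0, (-1))); last by [].
rewrite (_ : foldr rf e0 [:: o2; o1] = (1, 0, 0, 0)); last by [].
rewrite (_ : foldr rf e1 [:: o2; o1] = (1, 0, (-1), 1)); last by [].
rewrite (_ : foldr rf e2 [:: o2; o1] = (0, 1, (-1), 0)); last by [].
rewrite (_ : foldr rf e3 [:: o2; o1] = (0, 0, 0, 1)); last by [].
rewrite (_ : foldr rf e0 [:: o3; o1; o2; o0; o1; o3; o0; o1; o2; o0; o1; o0; o2; o1] = ((-1), 0, 0, 0)); last by [].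
rewrite (_ : foldr rf e1 [:: o3; o1; o2; o0; o1; o3; o0; o1; o2; o0; o1; o0; o2; o1] = ((-1), 0, 1, (-1))); last by [].
rewrite (_ : foldr rf e2 [:: o3; o1; o2; o0; o1; o3; o0; o1; o2; o0; o1; o0; o2; o1] = (0, (-1), 1, 0)); last by [].
rewrite (_ : foldr rf e3 [:: o3; o1; o2; o0; o1; o3; o0; o1; o2; o0; o1; o0; o2; o1] = (0, 0, 0, (-1))); last by [].
rewrite (_ : foldr rf e0 [:: o2; o1; o3; o0; o1; o0] = (0, 1, (-1), (-1))); last by [].
rewrite (_ : foldr rf e1 [:: o2; o1; o3; o0; o1; o0] = (0, 1, (-2), 0)); last by [].
rewrite (_ : foldr rf e2 [:: o2; o1; o3; o0; o1; o0] = (0, 1, (-1), 0)); last by [].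
rewrite (_ : foldr rf e3 [:: o2; o1; o3; o0; o1; o0] = (1, 0, (-1), 0)); last by [].
rewrite (_ : foldr rf e0 [:: o3; o1; o2; o0; o1; o3; o0; o1; o2; o0; o1; o0; o2; o1; o3; o0; o1; o0] = (0, (-1), 1, 1)); last by [].
rewrite (_ : foldr rf e1 [:: o3; o1; o2; o0; o1; o3; o0; o1; o2; o0; o1; o0; o2; o1; o3; o0; o1; o0] = (0, (-1), 2, 0)); last by [].
rewrite (_ : foldr rf e2 [:: o3; o1; o2; o0; o1; o3; o0; o1; o2; o0; o1; o0; o2; o1; o3; o0; o1; o0] = (0, (-1), 1, 0)); last by [].
rewrite (_ : foldr rf e3 [:: o3; o1; o2; o0; o1; o3; o0; o1; o2; o0; o1; o0; o2; o1; o3; o0; o1; o0] = ((-1), 0, 1, 0)); last by [].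
rewrite (_ : foldr rf e0 [:: o2; o1; o2; o1; o3; o0; o1; o0] = (1, (-1), 0, 0)); last by [].
rewrite (_ : foldr rf e1 [:: o2; o1; o2; o1; o3; o0; o1; o0] = (1, (-2), 1, 1)); last by [].
rewrite (_ : foldr rf e2 [:: o2; o1; o2; o1; o3; o0; o1; o0] = (1, (-1), 0, 1)); last by [].
rewrite (_ : foldr rf e3 [:: o2; o1; o2; o1; o3; o0; o1; o0] = (1, (-1), 1, 0)); last by [].
rewrite (_ : foldr rf e0 [:: o3; o1; o2; o0; o1; o3; o0; o1; o2; o0; o1; o0; o2; o1; o2; o1; o3; o0; o1; o0] = ((-1), 1, 0, 0)); last by [].
rewrite (_ : foldr rf e1 [:: o3; o1; o2; o0; o1; o3; o0; o1; o2; o0; o1; o0; o2; o1; o2; o1; o3; o0; o1; o0] = ((-1), 2, (-1), (-1))); last by [].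
rewrite (_ : foldr rf e2 [:: o3; o1; o2; o0; o1; o3; o0; o1; o2; o0; o1; o0; o2; o1; o2; o1; o3; o0; o1; o0] = ((-1), 1, 0, (-1))); last by [].
rewrite (_ : foldr rf e3 [:: o3; o1; o2; o0; o1; o3; o0; o1; o2; o0; o1; o0; o2; o1; o2; o1; o3; o0; o1; o0] = ((-1), 1, (-1), 0)); last by [].
cbn [comb addt fst snd qP01t q4Pt]. ring.
Qed.

Lemma mv_qP02 a b : \sum_(ws <- Ws_qP02) qP02 (a + Sw ws b) = (size Ws_qP02)%:R * qP02 a.
Proof.
rewrite /qP02; apply: mv_gen => a0 a1 a2 a3 b0 b1 b2 b3.
rewrite /Ws_qP02 /= !big_cons big_nil !(foldr_lin _ b0 b1 b2 b3).
rewrite (_ : foldr rf e0 [:: ] = (1, 0, 0, 0)); last by [].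
rewrite (_ : foldr rf e1 [:: ] = (0, 1, 0, 0)); last by [].
rewrite (_ : foldr rf e2 [:: ] = (0, 0, 1, 0)); last by [].
rewrite (_ : foldr rf e3 [:: ] = (0, 0, 0, 1)); last by [].
rewrite (_ : foldr rf e0 [:: o3; o1; o2; o0; o1; o3; o0; o1; o2; o0; o1; o0] = ((-1), 0, 0, 0)); last by [].
rewrite (_ : foldr rf e1 [:: o3; o1; o2; o0; o1; o3; o0; o1; o2; o0; o1; o0] = (0, (-1), 0, 0)); last by [].
rewrite (_ : foldr rf e2 [:: o3; o1; o2; o0; o1; o3; o0; o1; o2; o0; o1; o0] = (0, 0, (-1), 0)); last by [].
rewrite (_ : foldr rf e3 [:: o3; o1; o2; o0; o1; o3; o0; o1; o2; o0; o1; o0] = (0, 0, 0, (-1))); last by [].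
rewrite (_ : foldr rf e0 [:: o0] = ((-1), 1, 0, 0)); last by [].
rewrite (_ : foldr rf e1 [:: o0] = (0, 1, 0, 0)); last by [].
rewrite (_ : foldr rf e2 [:: o0] = (0, 0, 1, 0)); last by [].
rewrite (_ : foldr rf e3 [:: o0] = (0, 0, 0, 1)); last by [].
rewrite (_ : foldr rf e0 [:: o3; o1; o2; o0; o1; o3; o0; o1; o2; o0; o1; o0; o0] = (1, (-1), 0, 0)); last by [].
rewrite (_ : foldr rf e1 [:: o3; o1; o2; o0; o1; o3; o0; o1; o2; o0; o1; o0; o0] = (0, (-1), 0, 0)); last by [].
rewrite (_ : foldr rf e2 [:: o3; o1; o2; o0; o1; o3; o0; o1; o2; o0; o1; o0; o0] = (0, 0, (-1), 0)); last by [].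
rewrite (_ : foldr rf e3 [:: o3; o1; o2; o0; o1; o3; o0; o1; o2; o0; o1; o0; o0] = (0, 0, 0, (-1))); last by [].
cbn [comb addt fst snd qP02t q4Pt]. ring.
Qed.

Lemma mv_qP03 a b : \sum_(ws <- Ws_qP03) qP03 (a + Sw ws b) = (size Ws_qP03)%:R * qP03 a.
Proof.
rewrite /qP03; apply: mv_gen => a0 a1 a2 a3 b0 b1 b2 b3.
rewrite /Ws_qP03 /= !big_cons big_nil !(foldr_lin _ b0 b1 b2 b3).
rewrite (_ : foldr rf e0 [:: ] = (1, 0, 0, 0)); last by [].
rewrite (_ : foldr rf e1 [:: ] = (0, 1, 0, 0)); last by [].
rewrite (_ : foldr rf e2 [:: ] = (0, 0, 1, 0)); last by [].
rewrite (_ : foldr rf e3 [:: ] = (0, 0, 0, 1)); last by [].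
rewrite (_ : foldr rf e0 [:: o3; o1; o2; o0; o1; o3; o0; o1; o2; o0; o1; o0] = ((-1), 0, 0, 0)); last by [].
rewrite (_ : foldr rf e1 [:: o3; o1; o2; o0; o1; o3; o0; o1; o2; o0; o1; o0] = (0, (-1), 0, 0)); last by [].
rewrite (_ : foldr rf e2 [:: o3; o1; o2; o0; o1; o3; o0; o1; o2; o0; o1; o0] = (0, 0, (-1), 0)); last by [].
rewrite (_ : foldr rf e3 [:: o3; o1; o2; o0; o1; o3; o0; o1; o2; o0; o1; o0] = (0, 0, 0, (-1))); last by [].
rewrite (_ : foldr rf e0 [:: o0] = ((-1), 1, 0, 0)); last by [].
rewrite (_ : foldr rf e1 [:: o0] = (0, 1, 0, 0)); last by [].
rewrite (_ : foldr rf e2 [:: o0] = (0, 0, 1, 0)); last by [].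
rewrite (_ : foldr rf e3 [:: o0] = (0, 0, 0, 1)); last by [].
rewrite (_ : foldr rf e0 [:: o3; o1; o2; o0; o1; o3; o0; o1; o2; o0; o1; o0; o0] = (1, (-1), 0, 0)); last by [].
rewrite (_ : foldr rf e1 [:: o3; o1; o2; o0; o1; o3; o0; o1; o2; o0; o1; o0; o0] = (0, (-1), 0, 0)); last by [].
rewrite (_ : foldr rf e2 [:: o3; o1; o2; o0; o1; o3; o0; o1; o2; o0; o1; o0; o0] = (0, 0, (-1), 0)); last by [].
rewrite (_ : foldr rf e3 [:: o3; o1; o2; o0; o1; o3; o0; o1; o2; o0; o1; o0; o0] = (0, 0, 0, (-1))); last by [].
cbn [comb addt fst snd qP03t q4Pt]. ring.
Qed.

Lemma mv_qP11 a b : \sum_(ws <- Ws_qP11) qP11 (a + Sw ws b) = (size Ws_qP11)%:R * qP11 a.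
Proof.
rewrite /qP11; apply: mv_gen => a0 a1 a2 a3 b0 b1 b2 b3.
rewrite /Ws_qP11 /= !big_cons big_nil !(foldr_lin _ b0 b1 b2 b3).
rewrite (_ : foldr rf e0 [:: ] = (1, 0, 0, 0)); last by [].
rewrite (_ : foldr rf e1 [:: ] = (0, 1, 0, 0)); last by [].
rewrite (_ : foldr rf e2 [:: ] = (0, 0, 1, 0)); last by [].
rewrite (_ : foldr rf e3 [:: ] = (0, 0, 0, 1)); last by [].
rewrite (_ : foldr rf e0 [:: o3; o1; o2; o0; o1; o3; o0; o1; o2; o0; o1; o0] = ((-1), 0, 0, 0)); last by [].
rewrite (_ : foldr rf e1 [:: o3; o1; o2; o0; o1; o3; o0; o1; o2; o0; o1; o0] = (0, (-1), 0, 0)); last by [].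
rewrite (_ : foldr rf e2 [:: o3; o1; o2; o0; o1; o3; o0; o1; o2; o0; o1; o0] = (0, 0, (-1), 0)); last by [].
rewrite (_ : foldr rf e3 [:: o3; o1; o2; o0; o1; o3; o0; o1; o2; o0; o1; o0] = (0, 0, 0, (-1))); last by [].
rewrite (_ : foldr rf e0 [:: o2; o0] = ((-1), 1, 0, 0)); last by [].
rewrite (_ : foldr rf e1 [:: o2; o0] = (0, 1, 0, 0)); last by [].
rewrite (_ : foldr rf e2 [:: o2; o0] = (0, 1, (-1), 0)); last by [].
rewrite (_ : foldr rf e3 [:: o2; o0] = (0, 0, 0, 1)); last by [].
rewrite (_ : foldr rf e0 [:: o3; o1; o2; o0; o1; o3; o0; o1; o2; o0; o1; o0; o2; o0] = (1, (-1), 0, 0)); last by [].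
rewrite (_ : foldr rf e1 [:: o3; o1; o2; o0; o1; o3; o0; o1; o2; o0; o1; o0; o2; o0] = (0, (-1), 0, 0)); last by [].
rewrite (_ : foldr rf e2 [:: o3; o1; o2; o0; o1; o3; o0; o1; o2; o0; o1; o0; o2; o0] = (0, (-1), 1, 0)); last by [].
rewrite (_ : foldr rf e3 [:: o3; o1; o2; o0; o1; o3; o0; o1; o2; o0; o1; o0; o2; o0] = (0, 0, 0, (-1))); last by [].
rewrite (_ : foldr rf e0 [:: o3; o0] = ((-1), 1, 0, 0)); last by [].
rewrite (_ : foldr rf e1 [:: o3; o0] = (0, 1, 0, 0)); last by [].
rewrite (_ : foldr rf e2 [:: o3; o0] = (0, 0, 1, 0)); last by [].
rewrite (_ : foldr rf e3 [:: o3; o0] = (0, 1, 0, (-1))); last by [].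
rewrite (_ : foldr rf e0 [:: o3; o1; o2; o0; o1; o3; o0; o1; o2; o0; o1; o0; o3; o0] = (1, (-1), 0, 0)); last by [].
rewrite (_ : foldr rf e1 [:: o3; o1; o2; o0; o1; o3; o0; o1; o2; o0; o1; o0; o3; o0] = (0, (-1), 0, 0)); last by [].
rewrite (_ : foldr rf e2 [:: o3; o1; o2; o0; o1; o3; o0; o1; o2; o0; o1; o0; o3; o0] = (0, 0, (-1), 0)); last by [].
rewrite (_ : foldr rf e3 [:: o3; o1; o2; o0; o1; o3; o0; o1; o2; o0; o1; o0; o3; o0] = (0, (-1), 0, 1)); last by [].
rewrite (_ : foldr rf e0 [:: o2; o0; o3; o0] = (1, 0, 0, 0)); last by [].
rewrite (_ : foldr rf e1 [:: o2; o0; o3; o0] = (0, 1, 0, 0)); last by [].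
rewrite (_ : foldr rf e2 [:: o2; o0; o3; o0] = (0, 1, (-1), 0)); last by [].
rewrite (_ : foldr rf e3 [:: o2; o0; o3; o0] = (0, 1, 0, (-1))); last by [].
rewrite (_ : foldr rf e0 [:: o3; o1; o2; o0; o1; o3; o0; o1; o2; o0; o1; o0; o2; o0; o3; o0] = ((-1), 0, 0, 0)); last by [].
rewrite (_ : foldr rf e1 [:: o3; o1; o2; o0; o1; o3; o0; o1; o2; o0; o1; o0; o2; o0; o3; o0] = (0, (-1), 0, 0)); last by [].
rewrite (_ : foldr rf e2 [:: o3; o1; o2; o0; o1; o3; o0; o1; o2; o0; o1; o0; o2; o0; o3; o0] = (0, (-1), 1, 0)); last by [].
rewrite (_ : foldr rf e3 [:: o3; o1; o2; o0; o1; o3; o0; o1; o2; o0; o1; o0; o2; o0; o3; o0] = (0, (-1), 0, 1)); last by [].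
cbn [comb addt fst snd qP11t q4Pt]. ring.
Qed.

Lemma mv_qP12 a b : \sum_(ws <- Ws_qP12) qP12 (a + Sw ws b) = (size Ws_qP12)%:R * qP12 a.
Proof.
rewrite /qP12; apply: mv_gen => a0 a1 a2 a3 b0 b1 b2 b3.
rewrite /Ws_qP12 /= !big_cons big_nil !(foldr_lin _ b0 b1 b2 b3).
rewrite (_ : foldr rf e0 [:: ] = (1, 0, 0, 0)); last by [].
rewrite (_ : foldr rf e1 [:: ] = (0, 1, 0, 0)); last by [].
rewrite (_ : foldr rf e2 [:: ] = (0, 0, 1, 0)); last by [].
rewrite (_ : foldr rf e3 [:: ] = (0, 0, 0, 1)); last by [].
rewrite (_ : foldr rf e0 [:: o3; o1; o2; o0; o1; o3; o0; o1; o2; o0; o1; o0] = ((-1), 0, 0, 0)); last by [].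
rewrite (_ : foldr rf e1 [:: o3; o1; o2; o0; o1; o3; o0; o1; o2; o0; o1; o0] = (0, (-1), 0, 0)); last by [].
rewrite (_ : foldr rf e2 [:: o3; o1; o2; o0; o1; o3; o0; o1; o2; o0; o1; o0] = (0, 0, (-1), 0)); last by [].
rewrite (_ : foldr rf e3 [:: o3; o1; o2; o0; o1; o3; o0; o1; o2; o0; o1; o0] = (0, 0, 0, (-1))); last by [].
rewrite (_ : foldr rf e0 [:: o1; o0] = (0, (-1), 1, 1)); last by [].
rewrite (_ : foldr rf e1 [:: o1; o0] = (1, (-1), 1, 1)); last by [].
rewrite (_ : foldr rf e2 [:: o1; o0] = (0, 0, 1, 0)); last by [].
rewrite (_ : foldr rf e3 [:: o1; o0] = (0, 0, 0, 1)); last by [].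
rewrite (_ : foldr rf e0 [:: o3; o1; o2; o0; o1; o3; o0; o1; o2; o0; o1; o0; o1; o0] = (0, 1, (-1), (-1))); last by [].
rewrite (_ : foldr rf e1 [:: o3; o1; o2; o0; o1; o3; o0; o1; o2; o0; o1; o0; o1; o0] = ((-1), 1, (-1), (-1))); last by [].
rewrite (_ : foldr rf e2 [:: o3; o1; o2; o0; o1; o3; o0; o1; o2; o0; o1; o0; o1; o0] = (0, 0, (-1), 0)); last by [].
rewrite (_ : foldr rf e3 [:: o3; o1; o2; o0; o1; o3; o0; o1; o2; o0; o1; o0; o1; o0] = (0, 0, 0, (-1))); last by [].
rewrite (_ : foldr rf e0 [:: o1; o3; o1; o2; o1; o0] = (1, (-1), 0, 0)); last by [].
rewrite (_ : foldr rf e1 [:: o1; o3; o1; o2; o1; o0] = (2, (-1), 0, 0)); last by [].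
rewrite (_ : foldr rf e2 [:: o1; o3; o1; o2; o1; o0] = (1, 0, 0, (-1))); last by [].
rewrite (_ : foldr rf e3 [:: o1; o3; o1; o2; o1; o0] = (1, (-1), 1, 0)); last by [].
rewrite (_ : foldr rf e0 [:: o3; o1; o2; o0; o1; o3; o0; o1; o2; o0; o1; o0; o1; o3; o1; o2; o1; o0] = ((-1), 1, 0, 0)); last by [].
rewrite (_ : foldr rf e1 [:: o3; o1; o2; o0; o1; o3; o0; o1; o2; o0; o1; o0; o1; o3; o1; o2; o1; o0] = ((-2), 1, 0, 0)); last by [].
rewrite (_ : foldr rf e2 [:: o3; o1; o2; o0; o1; o3; o0; o1; o2; o0; o1; o0; o1; o3; o1; o2; o1; o0] = ((-1), 0, 0, 1)); last by [].
rewrite (_ : foldr rf e3 [:: o3; o1; o2; o0; o1; o3; o0; o1; o2; o0; o1; o0; o1; o3; o1; o2; o1; o0] = ((-1), 1, (-1), 0)); last by [].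
rewrite (_ : foldr rf e0 [:: o1; o0; o1; o3; o1; o2; o1; o0] = ((-1), 0, 0, 0)); last by [].
rewrite (_ : foldr rf e1 [:: o1; o0; o1; o3; o1; o2; o1; o0] = ((-1), (-1), 1, 1)); last by [].
rewrite (_ : foldr rf e2 [:: o1; o0; o1; o3; o1; o2; o1; o0] = (0, (-1), 1, 0)); last by [].
rewrite (_ : foldr rf e3 [:: o1; o0; o1; o3; o1; o2; o1; o0] = ((-1), 0, 1, 0)); last by [].
rewrite (_ : foldr rf e0 [:: o3; o1; o2; o0; o1; o3; o0; o1; o2; o0; o1; o0; o1; o0; o1; o3; o1; o2; o1; o0] = (1, 0, 0, 0)); last by [].
rewrite (_ : foldr rf e1 [:: o3; o1; o2; o0; o1; o3; o0; o1; o2; o0; o1; o0; o1; o0; o1; o3; o1; o2; o1; o0] = (1, 1, (-1), (-1))); last by [].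
rewrite (_ : foldr rf e2 [:: o3; o1; o2; o0; o1; o3; o0; o1; o2; o0; o1; o0; o1; o0; o1; o3; o1; o2; o1; o0] = (0, 1, (-1), 0)); last by [].
rewrite (_ : foldr rf e3 [:: o3; o1; o2; o0; o1; o3; o0; o1; o2; o0; o1; o0; o1; o0; o1; o3; o1; o2; o1; o0] = (1, 0, (-1), 0)); last by [].
cbn [comb addt fst snd qP12t q4Pt]. ring.
Qed.

Lemma mv_qP13 a b : \sum_(ws <- Ws_qP13) qP13 (a + Sw ws b) = (size Ws_qP13)%:R * qP13 a.
Proof.
rewrite /qP13; apply: mv_gen => a0 a1 a2 a3 b0 b1 b2 b3.
rewrite /Ws_qP13 /= !big_cons big_nil !(foldr_lin _ b0 b1 b2 b3).
rewrite (_ : foldr rf e0 [:: ] = (1, 0, 0, 0)); last by [].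
rewrite (_ : foldr rf e1 [:: ] = (0, 1, 0, 0)); last by [].
rewrite (_ : foldr rf e2 [:: ] = (0, 0, 1, 0)); last by [].
rewrite (_ : foldr rf e3 [:: ] = (0, 0, 0, 1)); last by [].
rewrite (_ : foldr rf e0 [:: o3; o1; o2; o0; o1; o3; o0; o1; o2; o0; o1; o0] = ((-1), 0, 0, 0)); last by [].
rewrite (_ : foldr rf e1 [:: o3; o1; o2; o0; o1; o3; o0; o1; o2; o0; o1; o0] = (0, (-1), 0, 0)); last by [].
rewrite (_ : foldr rf e2 [:: o3; o1; o2; o0; o1; o3; o0; o1; o2; o0; o1; o0] = (0, 0, (-1), 0)); last by [].
rewrite (_ : foldr rf e3 [:: o3; o1; o2; o0; o1; o3; o0; o1; o2; o0; o1; o0] = (0, 0, 0, (-1))); last by [].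
rewrite (_ : foldr rf e0 [:: o1; o0] = (0, (-1), 1, 1)); last by [].
rewrite (_ : foldr rf e1 [:: o1; o0] = (1, (-1), 1, 1)); last by [].
rewrite (_ : foldr rf e2 [:: o1; o0] = (0, 0, 1, 0)); last by [].
rewrite (_ : foldr rf e3 [:: o1; o0] = (0, 0, 0, 1)); last by [].
rewrite (_ : foldr rf e0 [:: o3; o1; o2; o0; o1; o3; o0; o1; o2; o0; o1; o0; o1; o0] = (0, 1, (-1), (-1))); last by [].
rewrite (_ : foldr rf e1 [:: o3; o1; o2; o0; o1; o3; o0; o1; o2; o0; o1; o0; o1; o0] = ((-1), 1, (-1), (-1))); last by [].
rewrite (_ : foldr rf e2 [:: o3; o1; o2; o0; o1; o3; o0; o1; o2; o0; o1; o0; o1; o0] = (0, 0, (-1), 0)); last by [].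
rewrite (_ : foldr rf e3 [:: o3; o1; o2; o0; o1; o3; o0; o1; o2; o0; o1; o0; o1; o0] = (0, 0, 0, (-1))); last by [].
rewrite (_ : foldr rf e0 [:: o2; o1; o3; o2; o1; o0] = (1, (-1), 0, 0)); last by [].
rewrite (_ : foldr rf e1 [:: o2; o1; o3; o2; o1; o0] = (2, (-1), 0, 0)); last by [].
rewrite (_ : foldr rf e2 [:: o2; o1; o3; o2; o1; o0] = (1, (-1), 0, 1)); last by [].
rewrite (_ : foldr rf e3 [:: o2; o1; o3; o2; o1; o0] = (1, 0, (-1), 0)); last by [].
rewrite (_ : foldr rf e0 [:: o3; o1; o2; o0; o1; o3; o0; o1; o2; o0; o1; o0; o2; o1; o3; o2; o1; o0] = ((-1), 1, 0, 0)); last by [].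
rewrite (_ : foldr rf e1 [:: o3; o1; o2; o0; o1; o3; o0; o1; o2; o0; o1; o0; o2; o1; o3; o2; o1; o0] = ((-2), 1, 0, 0)); last by [].
rewrite (_ : foldr rf e2 [:: o3; o1; o2; o0; o1; o3; o0; o1; o2; o0; o1; o0; o2; o1; o3; o2; o1; o0] = ((-1), 1, 0, (-1))); last by [].
rewrite (_ : foldr rf e3 [:: o3; o1; o2; o0; o1; o3; o0; o1; o2; o0; o1; o0; o2; o1; o3; o2; o1; o0] = ((-1), 0, 1, 0)); last by [].
rewrite (_ : foldr rf e0 [:: o1; o0; o2; o1; o3; o2; o1; o0] = ((-1), 0, 0, 0)); last by [].
rewrite (_ : foldr rf e1 [:: o1; o0; o2; o1; o3; o2; o1; o0] = ((-1), (-1), 1, 1)); last by [].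
rewrite (_ : foldr rf e2 [:: o1; o0; o2; o1; o3; o2; o1; o0] = ((-1), 0, 0, 1)); last by [].
rewrite (_ : foldr rf e3 [:: o1; o0; o2; o1; o3; o2; o1; o0] = (0, (-1), 0, 1)); last by [].
rewrite (_ : foldr rf e0 [:: o3; o1; o2; o0; o1; o3; o0; o1; o2; o0; o1; o0; o1; o0; o2; o1; o3; o2; o1; o0] = (1, 0, 0, 0)); last by [].
rewrite (_ : foldr rf e1 [:: o3; o1; o2; o0; o1; o3; o0; o1; o2; o0; o1; o0; o1; o0; o2; o1; o3; o2; o1; o0] = (1, 1, (-1), (-1))); last by [].
rewrite (_ : foldr rf e2 [:: o3; o1; o2; o0; o1; o3; o0; o1; o2; o0; o1; o0; o1; o0; o2; o1; o3; o2; o1; o0] = (1, 0, 0, (-1))); last by [].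
rewrite (_ : foldr rf e3 [:: o3; o1; o2; o0; o1; o3; o0; o1; o2; o0; o1; o0; o1; o0; o2; o1; o3; o2; o1; o0] = (0, 1, 0, (-1))); last by [].
cbn [comb addt fst snd qP13t q4Pt]. ring.
Qed.

Lemma mv_qP22 a b : \sum_(ws <- Ws_qP22) qP22 (a + Sw ws b) = (size Ws_qP22)%:R * qP22 a.
Proof.
rewrite /qP22; apply: mv_gen => a0 a1 a2 a3 b0 b1 b2 b3.
rewrite /Ws_qP22 /= !big_cons big_nil !(foldr_lin _ b0 b1 b2 b3).
rewrite (_ : foldr rf e0 [:: ] = (1, 0, 0, 0)); last by [].
rewrite (_ : foldr rf e1 [:: ] = (0, 1, 0, 0)); last by [].
rewrite (_ : foldr rf e2 [:: ] = (0, 0, 1, 0)); last by [].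
rewrite (_ : foldr rf e3 [:: ] = (0, 0, 0, 1)); last by [].
rewrite (_ : foldr rf e0 [:: o3; o1; o2; o0; o1; o3; o0; o1; o2; o0; o1; o0] = ((-1), 0, 0, 0)); last by [].
rewrite (_ : foldr rf e1 [:: o3; o1; o2; o0; o1; o3; o0; o1; o2; o0; o1; o0] = (0, (-1), 0, 0)); last by [].
rewrite (_ : foldr rf e2 [:: o3; o1; o2; o0; o1; o3; o0; o1; o2; o0; o1; o0] = (0, 0, (-1), 0)); last by [].
rewrite (_ : foldr rf e3 [:: o3; o1; o2; o0; o1; o3; o0; o1; o2; o0; o1; o0] = (0, 0, 0, (-1))); last by [].
rewrite (_ : foldr rf e0 [:: o1; o2; o0; o1] = (0, (-1), 1, 1)); last by [].
rewrite (_ : foldr rf e1 [:: o1; o2; o0; o1] = (0, (-1), 0, 2)); last by [].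
rewrite (_ : foldr rf e2 [:: o1; o2; o0; o1] = (1, (-1), 0, 1)); last by [].
rewrite (_ : foldr rf e3 [:: o1; o2; o0; o1] = (0, 0, 0, 1)); last by [].
rewrite (_ : foldr rf e0 [:: o3; o1; o2; o0; o1; o3; o0; o1; o2; o0; o1; o0; o1; o2; o0; o1] = (0, 1, (-1), (-1))); last by [].
rewrite (_ : foldr rf e1 [:: o3; o1; o2; o0; o1; o3; o0; o1; o2; o0; o1; o0; o1; o2; o0; o1] = (0, 1, 0, (-2))); last by [].
rewrite (_ : foldr rf e2 [:: o3; o1; o2; o0; o1; o3; o0; o1; o2; o0; o1; o0; o1; o2; o0; o1] = ((-1), 1, 0, (-1))); last by [].
rewrite (_ : foldr rf e3 [:: o3; o1; o2; o0; o1; o3; o0; o1; o2; o0; o1; o0; o1; o2; o0; o1] = (0, 0, 0, (-1))); last by [].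
rewrite (_ : foldr rf e0 [:: o1; o3; o0; o1] = (0, (-1), 1, 1)); last by [].
rewrite (_ : foldr rf e1 [:: o1; o3; o0; o1] = (0, (-1), 2, 0)); last by [].
rewrite (_ : foldr rf e2 [:: o1; o3; o0; o1] = (0, 0, 1, 0)); last by [].
rewrite (_ : foldr rf e3 [:: o1; o3; o0; o1] = (1, (-1), 1, 0)); last by [].
rewrite (_ : foldr rf e0 [:: o3; o1; o2; o0; o1; o3; o0; o1; o2; o0; o1; o0; o1; o3; o0; o1] = (0, 1, (-1), (-1))); last by [].
rewrite (_ : foldr rf e1 [:: o3; o1; o2; o0; o1; o3; o0; o1; o2; o0; o1; o0; o1; o3; o0; o1] = (0, 1, (-2), 0)); last by [].
rewrite (_ : foldr rf e2 [:: o3; o1; o2; o0; o1; o3; o0; o1; o2; o0; o1; o0; o1; o3; o0; o1] = (0, 0, (-1), 0)); last by [].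
rewrite (_ : foldr rf e3 [:: o3; o1; o2; o0; o1; o3; o0; o1; o2; o0; o1; o0; o1; o3; o0; o1] = ((-1), 1, (-1), 0)); last by [].
rewrite (_ : foldr rf e0 [:: o1; o2; o0; o1; o1; o3; o0; o1] = (1, 0, 0, 0)); last by [].
rewrite (_ : foldr rf e1 [:: o1; o2; o0; o1; o1; o3; o0; o1] = (2, (-1), 0, 0)); last by [].
rewrite (_ : foldr rf e2 [:: o1; o2; o0; o1; o1; o3; o0; o1] = (1, (-1), 0, 1)); last by [].
rewrite (_ : foldr rf e3 [:: o1; o2; o0; o1; o1; o3; o0; o1] = (1, (-1), 1, 0)); last by [].
rewrite (_ : foldr rf e0 [:: o3; o1; o2; o0; o1; o3; o0; o1; o2; o0; o1; o0; o1; o2; o0; o1; o1; o3; o0; o1] = ((-1), 0, 0, 0)); last by [].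
rewrite (_ : foldr rf e1 [:: o3; o1; o2; o0; o1; o3; o0; o1; o2; o0; o1; o0; o1; o2; o0; o1; o1; o3; o0; o1] = ((-2), 1, 0, 0)); last by [].
rewrite (_ : foldr rf e2 [:: o3; o1; o2; o0; o1; o3; o0; o1; o2; o0; o1; o0; o1; o2; o0; o1; o1; o3; o0; o1] = ((-1), 1, 0, (-1))); last by [].
rewrite (_ : foldr rf e3 [:: o3; o1; o2; o0; o1; o3; o0; o1; o2; o0; o1; o0; o1; o2; o0; o1; o1; o3; o0; o1] = ((-1), 1, (-1), 0)); last by [].
cbn [comb addt fst snd qP22t q4Pt]. ring.
Qed.

Lemma mv_qP23 a b : \sum_(ws <- Ws_qP23) qP23 (a + Sw ws b) = (size Ws_qP23)%:R * qP23 a.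
Proof.
rewrite /qP23; apply: mv_gen => a0 a1 a2 a3 b0 b1 b2 b3.
rewrite /Ws_qP23 /= !big_cons big_nil !(foldr_lin _ b0 b1 b2 b3).
rewrite (_ : foldr rf e0 [:: ] = (1, 0, 0, 0)); last by [].
rewrite (_ : foldr rf e1 [:: ] = (0, 1, 0, 0)); last by [].
rewrite (_ : foldr rf e2 [:: ] = (0, 0, 1, 0)); last by [].
rewrite (_ : foldr rf e3 [:: ] = (0, 0, 0, 1)); last by [].
rewrite (_ : foldr rf e0 [:: o3; o1; o2; o0; o1; o3; o0; o1; o2; o0; o1; o0] = ((-1), 0, 0, 0)); last by [].
rewrite (_ : foldr rf e1 [:: o3; o1; o2; o0; o1; o3; o0; o1; o2; o0; o1; o0] = (0, (-1), 0, 0)); last by [].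
rewrite (_ : foldr rf e2 [:: o3; o1; o2; o0; o1; o3; o0; o1; o2; o0; o1; o0] = (0, 0, (-1), 0)); last by [].
rewrite (_ : foldr rf e3 [:: o3; o1; o2; o0; o1; o3; o0; o1; o2; o0; o1; o0] = (0, 0, 0, (-1))); last by [].
rewrite (_ : foldr rf e0 [:: o2] = (1, 0, 0, 0)); last by [].
rewrite (_ : foldr rf e1 [:: o2] = (0, 1, 0, 0)); last by [].
rewrite (_ : foldr rf e2 [:: o2] = (0, 1, (-1), 0)); last by [].
rewrite (_ : foldr rf e3 [:: o2] = (0, 0, 0, 1)); last by [].
rewrite (_ : foldr rf e0 [:: o3; o1; o2; o0; o1; o3; o0; o1; o2; o0; o1; o0; o2] = ((-1), 0, 0, 0)); last by [].
rewrite (_ : foldr rf e1 [:: o3; o1; o2; o0; o1; o3; o0; o1; o2; o0; o1; o0; o2] = (0, (-1), 0, 0)); last by [].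
rewrite (_ : foldr rf e2 [:: o3; o1; o2; o0; o1; o3; o0; o1; o2; o0; o1; o0; o2] = (0, (-1), 1, 0)); last by [].
rewrite (_ : foldr rf e3 [:: o3; o1; o2; o0; o1; o3; o0; o1; o2; o0; o1; o0; o2] = (0, 0, 0, (-1))); last by [].
cbn [comb addt fst snd qP23t q4Pt]. ring.
Qed.

Lemma mv_qP33 a b : \sum_(ws <- Ws_qP33) qP33 (a + Sw ws b) = (size Ws_qP33)%:R * qP33 a.
Proof.
rewrite /qP33; apply: mv_gen => a0 a1 a2 a3 b0 b1 b2 b3.
rewrite /Ws_qP33 /= !big_cons big_nil !(foldr_lin _ b0 b1 b2 b3).
rewrite (_ : foldr rf e0 [:: ] = (1, 0, 0, 0)); last by [].
rewrite (_ : foldr rf e1 [:: ] = (0, 1, 0, 0)); last by [].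
rewrite (_ : foldr rf e2 [:: ] = (0, 0, 1, 0)); last by [].
rewrite (_ : foldr rf e3 [:: ] = (0, 0, 0, 1)); last by [].
rewrite (_ : foldr rf e0 [:: o3; o1; o2; o0; o1; o3; o0; o1; o2; o0; o1; o0] = ((-1), 0, 0, 0)); last by [].
rewrite (_ : foldr rf e1 [:: o3; o1; o2; o0; o1; o3; o0; o1; o2; o0; o1; o0] = (0, (-1), 0, 0)); last by [].
rewrite (_ : foldr rf e2 [:: o3; o1; o2; o0; o1; o3; o0; o1; o2; o0; o1; o0] = (0, 0, (-1), 0)); last by [].
rewrite (_ : foldr rf e3 [:: o3; o1; o2; o0; o1; o3; o0; o1; o2; o0; o1; o0] = (0, 0, 0, (-1))); last by [].
rewrite (_ : foldr rf e0 [:: o1; o2; o0; o1] = (0, (-1), 1, 1)); last by [].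
rewrite (_ : foldr rf e1 [:: o1; o2; o0; o1] = (0, (-1), 0, 2)); last by [].
rewrite (_ : foldr rf e2 [:: o1; o2; o0; o1] = (1, (-1), 0, 1)); last by [].
rewrite (_ : foldr rf e3 [:: o1; o2; o0; o1] = (0, 0, 0, 1)); last by [].
rewrite (_ : foldr rf e0 [:: o3; o1; o2; o0; o1; o3; o0; o1; o2; o0; o1; o0; o1; o2; o0; o1] = (0, 1, (-1), (-1))); last by [].
rewrite (_ : foldr rf e1 [:: o3; o1; o2; o0; o1; o3; o0; o1; o2; o0; o1; o0; o1; o2; o0; o1] = (0, 1, 0, (-2))); last by [].
rewrite (_ : foldr rf e2 [:: o3; o1; o2; o0; o1; o3; o0; o1; o2; o0; o1; o0; o1; o2; o0; o1] = ((-1), 1, 0, (-1))); last by [].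
rewrite (_ : foldr rf e3 [:: o3; o1; o2; o0; o1; o3; o0; o1; o2; o0; o1; o0; o1; o2; o0; o1] = (0, 0, 0, (-1))); last by [].
rewrite (_ : foldr rf e0 [:: o1; o3; o0; o1] = (0, (-1), 1, 1)); last by [].
rewrite (_ : foldr rf e1 [:: o1; o3; o0; o1] = (0, (-1), 2, 0)); last by [].
rewrite (_ : foldr rf e2 [:: o1; o3; o0; o1] = (0, 0, 1, 0)); last by [].
rewrite (_ : foldr rf e3 [:: o1; o3; o0; o1] = (1, (-1), 1, 0)); last by [].
rewrite (_ : foldr rf e0 [:: o3; o1; o2; o0; o1; o3; o0; o1; o2; o0; o1; o0; o1; o3; o0; o1] = (0, 1, (-1), (-1))); last by [].
rewrite (_ : foldr rf e1 [:: o3; o1; o2; o0; o1; o3; o0; o1; o2; o0; o1; o0; o1; o3; o0; o1] = (0, 1, (-2), 0)); last by [].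
rewrite (_ : foldr rf e2 [:: o3; o1; o2; o0; o1; o3; o0; o1; o2; o0; o1; o0; o1; o3; o0; o1] = (0, 0, (-1), 0)); last by [].
rewrite (_ : foldr rf e3 [:: o3; o1; o2; o0; o1; o3; o0; o1; o2; o0; o1; o0; o1; o3; o0; o1] = ((-1), 1, (-1), 0)); last by [].
rewrite (_ : foldr rf e0 [:: o1; o2; o0; o1; o1; o3; o0; o1] = (1, 0, 0, 0)); last by [].
rewrite (_ : foldr rf e1 [:: o1; o2; o0; o1; o1; o3; o0; o1] = (2, (-1), 0, 0)); last by [].
rewrite (_ : foldr rf e2 [:: o1; o2; o0; o1; o1; o3; o0; o1] = (1, (-1), 0, 1)); last by [].
rewrite (_ : foldr rf e3 [:: o1; o2; o0; o1; o1; o3; o0; o1] = (1, (-1), 1, 0)); last by [].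
rewrite (_ : foldr rf e0 [:: o3; o1; o2; o0; o1; o3; o0; o1; o2; o0; o1; o0; o1; o2; o0; o1; o1; o3; o0; o1] = ((-1), 0, 0, 0)); last by [].
rewrite (_ : foldr rf e1 [:: o3; o1; o2; o0; o1; o3; o0; o1; o2; o0; o1; o0; o1; o2; o0; o1; o1; o3; o0; o1] = ((-2), 1, 0, 0)); last by [].
rewrite (_ : foldr rf e2 [:: o3; o1; o2; o0; o1; o3; o0; o1; o2; o0; o1; o0; o1; o2; o0; o1; o1; o3; o0; o1] = ((-1), 1, 0, (-1))); last by [].
rewrite (_ : foldr rf e3 [:: o3; o1; o2; o0; o1; o3; o0; o1; o2; o0; o1; o0; o1; o2; o0; o1; o1; o3; o0; o1] = ((-1), 1, (-1), 0)); last by [].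
cbn [comb addt fst snd qP33t q4Pt]. ring.
Qed.

Definition G0 : seq (T4 * T4 * int) := [:: (((-2), 1, 0, 0), ((-1), 0, 0, 0), 1);
  (((-1), (-1), 1, 1), ((-1), (-1), 0, 0), 1);
  (((-1), 0, (-1), 1), ((-1), (-1), (-1), 0), 1);
  (((-1), 0, 1, (-1)), ((-1), (-1), 0, (-1)), 1);
  (((-1), 0, 1, 1), (0, 1, 1, 1), 1);
  (((-1), 1, (-1), (-1)), ((-1), (-1), (-1), (-1)), 1);
  (((-1), 1, (-1), 1), (0, 1, 0, 1), 1);
  (((-1), 1, 1, (-1)), (0, 1, 1, 0), 1);
  (((-1), 2, (-1), (-1)), (0, 1, 0, 0), 1);
  ((0, (-1), 0, 0), ((-1), (-2), (-1), (-1)), 1);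
  ((0, (-1), 0, 2), (0, 0, 0, 1), 1);
  ((0, (-1), 2, 0), (0, 0, 1, 0), 1);
  ((0, 1, (-2), 0), (0, 0, (-1), 0), 1);
  ((0, 1, 0, (-2)), (0, 0, 0, (-1)), 1);
  ((0, 1, 0, 0), (1, 2, 1, 1), 1);
  ((1, (-2), 1, 1), (0, (-1), 0, 0), 1);
  ((1, (-1), (-1), 1), (0, (-1), (-1), 0), 1);
  ((1, (-1), 1, (-1)), (0, (-1), 0, (-1)), 1);
  ((1, (-1), 1, 1), (1, 1, 1, 1), 1);
  ((1, 0, (-1), (-1)), (0, (-1), (-1), (-1)), 1);
  ((1, 0, (-1), 1), (1, 1, 0, 1), 1);
  ((1, 0, 1, (-1)), (1, 1, 1, 0), 1);
  ((1, 1, (-1), (-1)), (1, 1, 0, 0), 1);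
  ((2, (-1), 0, 0), (1, 0, 0, 0), 1);
  (((-2), 0, 0, 0), ((-2), (-2), (-1), (-1)), (-1));
  (((-2), 2, 0, 0), (0, 2, 1, 1), (-1));
  ((0, (-2), 2, 2), (0, 0, 1, 1), (-1));
  ((0, 0, (-2), 2), (0, 0, (-1), 1), (-1));
  ((0, 0, 2, (-2)), (0, 0, 1, (-1)), (-1));
  ((0, 2, (-2), (-2)), (0, 0, (-1), (-1)), (-1));
  ((2, (-2), 0, 0), (0, (-2), (-1), (-1)), (-1));
  ((2, 0, 0, 0), (2, 2, 1, 1), (-1))].

Definition Ct (c : T4) : T4 :=
  let: (c0, c1, c2, c3) := c in
  (2 * c0 - c1, - c0 + 2 * c1 - c2 - c3, - c1 + 2 * c2, - c1 + 2 * c3).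

Lemma sum4 (F : 'I_4 -> int) : \sum_(i < 4) F i = F o0 + F o1 + F o2 + F o3.
Proof.
rewrite !big_ord_recl big_ord0 addr0 !addrA.
by congr (F _ + F _ + F _ + F _); apply: val_inj.
Qed.

Lemma tup_mulC (c : weight) : tup (c *m cartanD4) = Ct (tup c).
Proof.
rewrite /tup /Ct !mxE !sum4 /cartanD4 !mxE /=.
congr (_, _, _, _); ring.
Qed.

Lemma rootlat_Ct c : in_rootlat (mkw (Ct c)).
Proof. by exists (mkw c); apply: tup_inj; rewrite tup_mulC !tup_mkw. Qed.

Lemma Ct_ok : all (fun x : T4 * T4 * int => Ct x.1.2 == x.1.1) G0.
Proof. by []. Qed.

Definition g0M (M : int) : GR := \sum_(x <- G0) << (M * x.2) *g mkw x.1.1 >>.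

Lemma msupp_sumU (X : eqType) (s : seq X) (c : X -> int) (m : X -> weight) a :
  a \in msupp (\sum_(x <- s) << c x *g m x >>) -> exists2 x, x \in s & a = m x.
Proof.
elim: s => [|y s IH]; first by rewrite big_nil msupp0 in_fset0.
rewrite big_cons => /(fsubsetP (msuppD_le _ _)); rewrite in_fsetU => /orP [H|H].
  move: H => /(fsubsetP msuppU_le); rewrite in_fset1 => /eqP ->.
  by exists y; rewrite ?mem_head.
by have [x xs ->] := IH H; exists x; rewrite ?in_cons ?xs ?orbT.
Qed.

Lemma inZT_g0 M : in_ZT (g0M M).
Proof.
move=> a /msupp_sumU [x xG ->].
have /eqP <- := allP Ct_ok x xG.
exact: rootlat_Ct.
Qed.

Lemma sref_mkw i t : sref i (mkw t) = mkw (rf i t).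
Proof. by apply: tup_inj; rewrite tup_sref !tup_mkw. Qed.

Lemma gr_act_id f : gr_act id f = f.
Proof. by rewrite [RHS]monalgE. Qed.

Lemma g0_gen M i : gr_act (sref i) (g0M M) = g0M M.
Proof.
rewrite /g0M gr_act_sum.
rewrite (eq_bigr (fun x => << (M * x.2) *g mkw (rf i x.1.1) >>)); last first.
  by move=> x _; rewrite gr_actU sref_mkw.
have -> : \sum_(x <- G0) << M * x.2 *g mkw (rf i x.1.1) >> =
   \sum_(y <- [seq (rf i x.1.1, x.2) | x <- G0]) << M * y.2 *g mkw y.1 >>.
  by rewrite big_map.
have -> : \sum_(x <- G0) << M * x.2 *g mkw x.1.1 >> =
   \sum_(y <- [seq (x.1.1, x.2) | x <- G0]) << M * y.2 *g mkw y.1 >>.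
  by rewrite big_map.
apply: perm_big; move: i; apply: ord4P; by [].
Qed.

Lemma W_inv_g0 M : W_invariant (g0M M).
Proof.
move=> w; elim => [|i w' _ IH]; first exact: gr_act_id.
by rewrite gr_act_comp IH g0_gen.
Qed.

Lemma II_g0 P M : II P (g0M M) = M * \sum_(x <- G0) x.2 * P (mkw x.1.1).
Proof.
rewrite /g0M II_sum mulr_sumr; apply: eq_bigr => x _; rewrite IIU; ring.
Qed.

Lemma gk_g0 M k : II (gk k) (g0M M) = M * \sum_(x <- G0) x.2 * gkt k x.1.1.
Proof. by rewrite II_g0; congr (_ * _); apply: eq_bigr => x _; rewrite /gk tup_mkw. Qed.

Definition bz2 (x : int) : int :=
  if 0 <= x then ('C(`|x|, 2))%:Z else ('C((`|x|).+1, 2))%:Z.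
Definition bz3 (x : int) : int :=
  if 0 <= x then ('C(`|x|, 3))%:Z else - ('C((`|x|).+2, 3))%:Z.

Lemma bin3S m : ('C(m.+3, 3) * 6 = m.+3 * m.+2 * m.+1)%N.
Proof. by rewrite (bin_ffact m.+3 3) ffactnS ffactnS ffactn1 /= mulnA. Qed.

Lemma bz2E x : 2 * bz2 x = x * (x - 1).
Proof.
rewrite /bz2; case: x => [[|m]|n] /=; first by [].
  have := bin2S m => /(congr1 (fun k : nat => k%:Z)); rewrite !PoszM => E.
  by rewrite mulrC E; ring.
rewrite NegzE.
have := bin2S n.+1 => /(congr1 (fun k : nat => k%:Z)); rewrite !PoszM => E.
by rewrite mulrC E; ring.
Qed.

Lemma bz3E x : 6 * bz3 x = x * (x - 1) * (x - 2).
Proof.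
rewrite /bz3; case: x => [[|[|[|m]]]|n] /=; try by [].
  have := bin3S m => /(congr1 (fun k : nat => k%:Z)); rewrite !PoszM => E.
  by rewrite mulrC E; ring.
rewrite NegzE.
have := bin3S n => /(congr1 (fun k : nat => k%:Z)); rewrite !PoszM => E.
by rewrite mulrN mulrC E; ring.
Qed.

Definition Tt (c : T4) : int := let: (c0, c1, c2, c3) := c in (-1) * bz3 c3 + (-1) * c2 * c3 + (2) * bz2 c2 * c3 + (-2) * bz3 c2 + (2) * c1 * bz2 c3 + (-2) * c1 * bz2 c2 + (2) * bz2 c1 * c3 + (-2) * bz2 c1 * c2 + (-1) * c0 * c3 + (1) * c0 * bz2 c2 + (-1) * c0 * bz2 c1 + (-9) * bz2 c0 * c3 + (7) * bz2 c0 * c2 + (2) * bz2 c0 * c1 + (-1) * bz3 c0.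

Lemma QiPt_Ct c : QiPt (Ct c) = 48 * Tt c.
Proof.
case: c => [[[c0 c1] c2] c3].
have -> : 48 * Tt (c0, c1, c2, c3) = (-8) * (6 * bz3 c3) + (-48) * c2 * c3 + (48) * (2 * bz2 c2) * c3 + (-16) * (6 * bz3 c2) + (48) * c1 * (2 * bz2 c3) + (-48) * c1 * (2 * bz2 c2) + (48) * (2 * bz2 c1) * c3 + (-48) * (2 * bz2 c1) * c2 + (-48) * c0 * c3 + (24) * c0 * (2 * bz2 c2) + (-24) * c0 * (2 * bz2 c1) + (-216) * (2 * bz2 c0) * c3 + (168) * (2 * bz2 c0) * c2 + (48) * (2 * bz2 c0) * c1 + (-8) * (6 * bz3 c0) by rewrite /Tt; ring.
rewrite !bz2E !bz3E /QiPt /Ct; ring.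
Qed.

Lemma II_Qi_div f : in_ZT f -> exists M, II QiP f = 48 * M.
Proof.
move=> fZ.
have D : (48 %| II QiP f)%Z.
  rewrite IIE big_seq; apply: rpred_sum => a /fZ [c ->].
  apply: dvdz_mull; rewrite /QiP tup_mulC QiPt_Ct.
  exact: dvdz_mulr (dvdzz 48).
by exists (II QiP f %/ 48)%Z; rewrite mulrC divzK.
Qed.

Lemma II_rel (D u v : int) G P Q R f :
  (forall l, D * G l = P l + u * Q l + v * R l) ->
  D * II G f = II P f + u * II Q f + v * II R f.
Proof.
move=> E; rewrite !IIE mulr_sumr !mulr_sumr -!big_split /=.
apply: eq_bigr => a _.
transitivity (f@_a * (D * G a)); first by ring.
by rewrite E; ring.
Qed.

Lemma Sdec_Dec q : Sdec q -> Dec q.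
Proof.
move=> [f [fZ [fI <-]]].
have hHp := harm_kill (@mv_HpP) isT fI.
have hl0 := harm_kill (@mv_linP0) isT fI.
have hl1 := harm_kill (@mv_linP1) isT fI.
have hl2 := harm_kill (@mv_linP2) isT fI.
have hl3 := harm_kill (@mv_linP3) isT fI.
have hq00 := harm_kill (@mv_qP00) isT fI.
have hq01 := harm_kill (@mv_qP01) isT fI.
have hq02 := harm_kill (@mv_qP02) isT fI.
have hq03 := harm_kill (@mv_qP03) isT fI.
have hq11 := harm_kill (@mv_qP11) isT fI.
have hq12 := harm_kill (@mv_qP12) isT fI.
have hq13 := harm_kill (@mv_qP13) isT fI.
have hq22 := harm_kill (@mv_qP22) isT fI.
have hq23 := harm_kill (@mv_qP23) isT fI.
have hq33 := harm_kill (@mv_qP33) isT fI.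
have [M hM] := II_Qi_div fZ.
have z0 : II (fun _ => 0) f = 0 by rewrite IIE big1 // => a _; rewrite mulr0.
have hq4 : II q4P f = 64 * M.
  have R : forall l, 1 * HpP l = (fun _ => 0) l + 4 * QiP l + (-3) * q4P l.
    move=> l; rewrite /HpP /QiP /q4P; case: (tup l) => [[[x0 x1] x2] x3].
    rewrite /HpPt /QiPt /q4Pt /=; ring.
  have := @II_rel 1 4 (-3) HpP (fun _ => 0) QiP q4P f R.
  rewrite z0 hHp hM; lia.
have g0 : II (gk 0) f = 4 * M.
  have R : forall l, 32 * gk 0 l = qP00 l + 2 * q4P l + 16 * linP0 l.
    move=> l; rewrite /gk /qP00 /q4P /linP0; case: (tup l) => [[[x0 x1] x2] x3].
    rewrite /gkt /qP00t /q4Pt /linP0t /=.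
    have E := ci2 x0; transitivity (16 * (2 * ci x0)); first by ring.
    by rewrite E; ring.
  have := @II_rel 32 2 16 (gk 0) (qP00) q4P (linP0) f R.
  rewrite hq00 hq4 hl0; lia.
have g1 : II (gk 1) f = 4 * M.
  have R : forall l, 32 * gk 1 l = qP11 l + 2 * q4P l + 16 * linP1 l.
    move=> l; rewrite /gk /qP11 /q4P /linP1; case: (tup l) => [[[x0 x1] x2] x3].
    rewrite /gkt /qP11t /q4Pt /linP1t /=.
    have E := ci2 x1; transitivity (16 * (2 * ci x1)); first by ring.
    by rewrite E; ring.
  have := @II_rel 32 2 16 (gk 1) (qP11) q4P (linP1) f R.
  rewrite hq11 hq4 hl1; lia.
have g2 : II (gk 2) f = 4 * M.
  have R : forall l, 32 * gk 2 l = qP22 l + 2 * q4P l + 16 * linP2 l.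
    move=> l; rewrite /gk /qP22 /q4P /linP2; case: (tup l) => [[[x0 x1] x2] x3].
    rewrite /gkt /qP22t /q4Pt /linP2t /=.
    have E := ci2 x2; transitivity (16 * (2 * ci x2)); first by ring.
    by rewrite E; ring.
  have := @II_rel 32 2 16 (gk 2) (qP22) q4P (linP2) f R.
  rewrite hq22 hq4 hl2; lia.
have g3 : II (gk 3) f = 4 * M.
  have R : forall l, 32 * gk 3 l = qP33 l + 2 * q4P l + 16 * linP3 l.
    move=> l; rewrite /gk /qP33 /q4P /linP3; case: (tup l) => [[[x0 x1] x2] x3].
    rewrite /gkt /qP33t /q4Pt /linP3t /=.
    have E := ci2 x3; transitivity (16 * (2 * ci x3)); first by ring.
    by rewrite E; ring.
  have := @II_rel 32 2 16 (gk 3) (qP33) q4P (linP3) f R.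
  rewrite hq33 hq4 hl3; lia.
have g4 : II (gk 4) f = -4 * M.
  have R : forall l, 16 * gk 4 l = qP01 l + (-1) * q4P l + 0 * linP0 l.
    move=> l; rewrite /gk /qP01 /q4P /linP0; case: (tup l) => [[[x0 x1] x2] x3].
    rewrite /gkt /qP01t /q4Pt /linP0t /=; ring.
  have := @II_rel 16 (-1) 0 (gk 4) (qP01) q4P (linP0) f R.
  rewrite hq01 hq4 hl0; lia.
have g5 : II (gk 5) f = 0 * M.
  have R : forall l, 16 * gk 5 l = qP02 l + (0) * q4P l + 0 * linP0 l.
    move=> l; rewrite /gk /qP02 /q4P /linP0; case: (tup l) => [[[x0 x1] x2] x3].
    rewrite /gkt /qP02t /q4Pt /linP0t /=; ring.
  have := @II_rel 16 (0) 0 (gk 5) (qP02) q4P (linP0) f R.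
  rewrite hq02 hq4 hl0; lia.
have g6 : II (gk 6) f = 0 * M.
  have R : forall l, 16 * gk 6 l = qP03 l + (0) * q4P l + 0 * linP0 l.
    move=> l; rewrite /gk /qP03 /q4P /linP0; case: (tup l) => [[[x0 x1] x2] x3].
    rewrite /gkt /qP03t /q4Pt /linP0t /=; ring.
  have := @II_rel 16 (0) 0 (gk 6) (qP03) q4P (linP0) f R.
  rewrite hq03 hq4 hl0; lia.
have g7 : II (gk 7) f = -4 * M.
  have R : forall l, 16 * gk 7 l = qP12 l + (-1) * q4P l + 0 * linP0 l.
    move=> l; rewrite /gk /qP12 /q4P /linP0; case: (tup l) => [[[x0 x1] x2] x3].
    rewrite /gkt /qP12t /q4Pt /linP0t /=; ring.
  have := @II_rel 16 (-1) 0 (gk 7) (qP12) q4P (linP0) f R.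
  rewrite hq12 hq4 hl0; lia.
have g8 : II (gk 8) f = -4 * M.
  have R : forall l, 16 * gk 8 l = qP13 l + (-1) * q4P l + 0 * linP0 l.
    move=> l; rewrite /gk /qP13 /q4P /linP0; case: (tup l) => [[[x0 x1] x2] x3].
    rewrite /gkt /qP13t /q4Pt /linP0t /=; ring.
  have := @II_rel 16 (-1) 0 (gk 8) (qP13) q4P (linP0) f R.
  rewrite hq13 hq4 hl0; lia.
have g9 : II (gk 9) f = 0 * M.
  have R : forall l, 16 * gk 9 l = qP23 l + (0) * q4P l + 0 * linP0 l.
    move=> l; rewrite /gk /qP23 /q4P /linP0; case: (tup l) => [[[x0 x1] x2] x3].
    rewrite /gkt /qP23t /q4Pt /linP0t /=; ring.
  have := @II_rel 16 (0) 0 (gk 9) (qP23) q4P (linP0) f R.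
  rewrite hq23 hq4 hl0; lia.
exists (g0M M); split; first exact: inZT_g0.
split; first exact: W_inv_g0.
rewrite !c2E; apply: eq_big_seq => k; rewrite mem_iota => /andP [_ hk].
rewrite gk_g0; congr (_%:~R * _).
have s0 : \sum_(x <- G0) x.2 * gkt 0 x.1.1 = 4 by rewrite unlock.
have s1 : \sum_(x <- G0) x.2 * gkt 1 x.1.1 = 4 by rewrite unlock.
have s2 : \sum_(x <- G0) x.2 * gkt 2 x.1.1 = 4 by rewrite unlock.
have s3 : \sum_(x <- G0) x.2 * gkt 3 x.1.1 = 4 by rewrite unlock.
have s4 : \sum_(x <- G0) x.2 * gkt 4 x.1.1 = -4 by rewrite unlock.
have s5 : \sum_(x <- G0) x.2 * gkt 5 x.1.1 = 0 by rewrite unlock.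
have s6 : \sum_(x <- G0) x.2 * gkt 6 x.1.1 = 0 by rewrite unlock.
have s7 : \sum_(x <- G0) x.2 * gkt 7 x.1.1 = -4 by rewrite unlock.
have s8 : \sum_(x <- G0) x.2 * gkt 8 x.1.1 = -4 by rewrite unlock.
have s9 : \sum_(x <- G0) x.2 * gkt 9 x.1.1 = 0 by rewrite unlock.
move: hk; do 10! (case: k => [|k]; first by move=> _; rewrite ?s0 ?s1 ?s2 ?s3 ?s4 ?s5 ?s6 ?s7 ?s8 ?s9 ?g0 ?g1 ?g2 ?g3 ?g4 ?g5 ?g6 ?g7 ?g8 ?g9 mulrC).
by [].
Qed.
Lemma inWeyl0 w : inWeyl w -> w 0 = 0.
Proof.
elim => [//|i w' _ IH] /=; rewrite IH /sref.
by rewrite (_ : (0 : weight) ord0 i = 0) ?scale0r ?subr0 // mxE.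
Qed.

Lemma gr_mul1 g : gr_mul << 1 *g (0 : weight) >> g = g.
Proof.
rewrite /gr_mul msuppU oner_eq0 big_seq_fset1 mcoeffUU [RHS]monalgE.
by apply: eq_bigr => b _; rewrite mul1r add0r.
Qed.

Lemma augII g : aug g = II (fun _ => 1) g.
Proof. by rewrite IIE /aug; apply: eq_bigr => a _; rewrite mulr1. Qed.

Lemma gk0 k : gk k 0 = 0.
Proof.
rewrite /gk /tup !mxE.
by case: k => [|[|[|[|[|[|[|[|[|k]]]]]]]]].
Qed.

Lemma Dec_Sdec q : Dec q -> Sdec q.
Proof.
move=> [f [fZ [fW <-]]].
exists (f - << aug f *g 0 >>); split.
  move=> a /(fsubsetP (msuppB_le _ _)); rewrite in_fsetU => /orP [/fZ //|].
  move/(fsubsetP msuppU_le); rewrite in_fset1 => /eqP ->.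
  by exists 0; rewrite mul0mx.
split.
  exists [:: (<< 1 *g (0 : weight) >>, f - << aug f *g 0 >>)]; split.
    move=> p; rewrite inE => /eqP -> /=; split.
      by move=> w hw; rewrite gr_actB gr_actU (inWeyl0 hw) fW.
    by rewrite augII IIB IIU -augII mulr1 subrr.
  by rewrite big_seq1 /= gr_mul1.
rewrite !c2E; apply: eq_bigr => k _.
by rewrite IIB IIU gk0 mulr0 subr0.
Qed.

Theorem corollary10p4 : forall q : Sym, Sdec q <-> Dec q.
Proof. by move=> q; split; [exact: Sdec_Dec | exact: Dec_Sdec]. Qed.
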